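(* If there is a $P$-counting module with data order $K\le 1$, then there is a (non-deterministic, i.e. possibly using $\mathsf{choose}$) $(\lambda n.\,2^{P(n)-1})$-counting module with data order $1$.
   Context: Types are built from a finite set $\mathcal{S}$ of sorts (containing $\mathsf{bool}$ and $\mathsf{list}$) by $\sigma ::= \iota \mid \sigma \times \tau \mid \sigma \Rightarrow \tau$. Type order: $\mathrm{ord}(\iota)=0$ for sorts, $\mathrm{ord}(\sigma\times\tau)=\max(\mathrm{ord}(\sigma),\mathrm{ord}(\tau))$, $\mathrm{ord}(\sigma\Rightarrow\tau)=\max(\mathrm{ord}(\sigma)+1,\mathrm{ord}(\tau))$. Constructors include $\mathsf{true},\mathsf{false}:\mathsf{bool}$, $[]:\mathsf{list}$ and infix $::\ :\mathsf{bool}\Rightarrow\mathsf{list}\Rightarrow\mathsf{list}$; constructors take arguments of order-$0$ types and return a sort. Syntax. Patterns: $\ell ::= x \mid c\,\ell_1\cdots\ell_m$ ($c$ a constructor). Expressions: $s ::= x \mid c \mid f \mid \mathsf{if}\ s_1\ \mathsf{then}\ s_2\ \mathsf{else}\ s_3 \mid \mathsf{choose}\ s_1\cdots s_n \mid (s,t) \mid s\,t$ ($f$ a defined symbol). Clauses have the form $f\,\ell_1\cdots\ell_k = s$; each lhs variable occurs once, rhs variables occur in the lhs, both sides are simply typed with a common type under some type environment $\Gamma$ for the lhs variables, constructors are fully applied, and all clauses for $f$ have the same number $\mathrm{arity}(f)$ of arguments. Sub-expressions: $s \unrhd t$ iff $s = t$ or $s \rhd t$, where $(s_1,s_2)\rhd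 t$, $\mathsf{if}\ s_1\ \mathsf{then}\ s_2\ \mathsf{else}\ s_3 \rhd t$ and $\mathsf{choose}\ s_1\cdots s_n\rhd t$ hold if $s_i \unrhd t$ for some $i$, and $s_1\,s_2 \rhd t$ holds if $s_1 \rhd t$ or $s_2 \unrhd t$. A clause $f\,\ell_1\cdots\ell_k=s$ is cons-free if every $t$ with $s\unrhd t$ of the form $c\,s_1\cdots s_m$ with $c$ a constructor is a data expression or satisfies $\ell_i\unrhd t$ for some $i$. A list of clauses has data order $K$ if all clauses can be typed with environments assigning every variable a type of order $\le K$. Semantics. Data expressions $d ::= c\,d_1\cdots d_m \mid (d,d')$; values $v ::= d \mid (v,w) \mid f\,v_1\cdots v_n$ with $n<\mathrm{arity}(f)$. For a list of clauses $p$, judgements $p,\gamma\vdash s\to w$ and $p\vdash^{\mathrm{call}} f\,v_1\cdots v_n\to w$ are derived by: $p,\gamma\vdash x\to\gamma(x)$; $p,\gamma\vdash f\to w$ if $p\vdash^{\mathrm{call}} f\to w$; $p,\gamma\vdash c\,s_1\cdots s_m\to c\,b_1\cdots b_m$ if $p,\gamma\vdash s_i\to b_i$; $p,\gamma\vdash(s,t)\to(v,w)$ if $s\to v$, $t\to w$; $p,\gamma\vdash\mathsf{choose}\ s_1\cdots s_n\to w$ if $p,\gamma\vdash s_i\to w$ for some $i$; $p,\gamma\vdash\mathsf{if}\ s_1\ \mathsf{then}\ s_2\ \mathsf{else}\ s_3\to w$ if $s_1\to\mathsf{true}$ and $s_2\to w$, or $s_1\to\mathsf{false}$ and $s_3\to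 w$; $p,\gamma\vdash s\,t\to w$ if $s\to f\,v_1\cdots v_n$, $t\to v_{n+1}$ and $p\vdash^{\mathrm{call}} f\,v_1\cdots v_{n+1}\to w$; $p\vdash^{\mathrm{call}} f\,v_1\cdots v_n\to f\,v_1\cdots v_n$ if $n<\mathrm{arity}(f)$; $p\vdash^{\mathrm{call}} f\,v_1\cdots v_k\to w$ if $p,\gamma\vdash s\to w$ where $f\,\ell_1\cdots\ell_k=s$ is the first clause of $p$ with $v_i=\ell_i\gamma$ for all $i$ for some $\gamma$ on the lhs variables. Counting modules. For $P:\mathbb{N}\to\mathbb{N}\setminus\{0\}$, a $P$-counting module is a tuple $(\alpha_\pi,\mathcal{D}_\pi,\mathcal{A}_\pi,[\![\cdot]\!]_\pi,p_\pi)$ where: $\alpha_\pi$ is a type; $\mathcal{D}_\pi$ is a set of fresh defined symbols containing $\mathsf{seed}_\pi:\mathsf{list}\Rightarrow\alpha_\pi$, $\mathsf{pred}_\pi:\mathsf{list}\Rightarrow\alpha_\pi\Rightarrow\alpha_\pi$, $\mathsf{zero}_\pi:\mathsf{list}\Rightarrow\alpha_\pi\Rightarrow\mathsf{bool}$; for each $n\in\mathbb{N}$, $\mathcal{A}^n_\pi$ is a set of values of type $\alpha_\pi$ built over the constructors and $\mathcal{D}_\pi$ and $[\![\cdot]\!]^n_\pi:\mathcal{A}^n_\pi\to\mathbb{N}$ is total; and $p_\pi$ is a list of cons-free clauses on the symbols of $\mathcal{D}_\pi$ such that for every boolean list $cs$ of length $n$: there is a unique value $v$ with $p_\pi\vdash^{\mathrm{call}}\mathsf{seed}_\pi\,cs\to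 v$, and it satisfies $v\in\mathcal{A}^n_\pi$, $[\![v]\!]^n_\pi=P(n)-1$; if $v\in\mathcal{A}^n_\pi$ with $[\![v]\!]^n_\pi=i>0$, there is a unique $w$ with $p_\pi\vdash^{\mathrm{call}}\mathsf{pred}_\pi\,cs\,v\to w$, and $w\in\mathcal{A}^n_\pi$, $[\![w]\!]^n_\pi=i-1$; and for $v\in\mathcal{A}^n_\pi$ with $[\![v]\!]^n_\pi=i$, $p_\pi\vdash^{\mathrm{call}}\mathsf{zero}_\pi\,cs\,v\to\mathsf{true}$ iff $i=0$, and $p_\pi\vdash^{\mathrm{call}}\mathsf{zero}_\pi\,cs\,v\to\mathsf{false}$ iff $i>0$. The module has data order $K$ if $p_\pi$ has data order $K$. *)

(* Defs.v *)
From Stdlib Require Import List Arith.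
Import ListNotations.
Set Implicit Arguments.

Inductive ty (Srt : Type) : Type :=
| TSort (s : Srt)
| TProd (a b : ty Srt)
| TArrow (a b : ty Srt).
Arguments TSort {Srt} s.
Arguments TProd {Srt} a b.
Arguments TArrow {Srt} a b.

Fixpoint ord {Srt} (t : ty Srt) : nat :=
  match t with
  | TSort _ => 0
  | TProd a b => Nat.max (ord a) (ord b)
  | TArrow a b => Nat.max (Datatypes.S (ord a)) (ord b)
  end.

Fixpoint arrows {Srt} (ts : list (ty Srt)) (t : ty Srt) : ty Srt :=
  match ts with [] => t | a :: ts' => TArrow a (arrows ts' t) end.

Record signature := {
  sort : Type;
  sort_finite : exists l : list sort, forall s, In s l;
  s_bool : sort;
  s_list : sort;
  s_bool_list : s_bool <> s_list;
  con : Type;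
  con_args : con -> list (ty sort);
  con_res : con -> sort;
  con_args_ord0 : forall c t, In t (con_args c) -> ord t = 0;
  c_true : con; c_false : con; c_nil : con; c_cons : con;
  c_true_ty : con_args c_true = [] /\ con_res c_true = s_bool;
  c_false_ty : con_args c_false = [] /\ con_res c_false = s_bool;
  c_nil_ty : con_args c_nil = [] /\ con_res c_nil = s_list;
  c_cons_ty : con_args c_cons = [TSort s_bool; TSort s_list]
              /\ con_res c_cons = s_list;
  c_true_false : c_true <> c_false;
  c_nil_cons : c_nil <> c_cons
}.

Arguments con_args {s} _.
Arguments con_res {s} _.
Arguments s_bool {s}.
Arguments s_list {s}.
Arguments c_true {s}.
Arguments c_false {s}.
Arguments c_nil {s}.
Arguments c_cons {s}.

Definition fsym := nat.
Definition var := nat.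

Section Lang.
Variable Sg : signature.
Notation Ty := (ty (sort Sg)).
Notation C := (con Sg).

Inductive pat : Type :=
| PVar (x : var)
| PCon (c : C) (args : list pat).

(* constructor applications are written fully applied: ECon c [s1;..;sm] *)
Inductive expr : Type :=
| EVar (x : var)
| ECon (c : C) (args : list expr)
| EFun (f : fsym)
| EIf (s1 s2 s3 : expr)
| EChoose (ss : list expr)
| EPair (s t : expr)
| EApp (s t : expr).

Inductive val : Type :=
| VCon (c : C) (args : list val)
| VPair (v w : val)
| VFun (f : fsym) (args : list val).   (* partial application f v1 .. vn *)

Record clause := mkClause { cl_f : fsym; cl_lhs : list pat; cl_rhs : expr }.
Definition program := list clause.

Fixpoint pat_expr (l : pat) : expr :=
  match l with
  | PVar x => EVar x
  | PCon c ls => ECon c (map pat_expr ls)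
  end.

Fixpoint pat_vars (l : pat) : list var :=
  match l with
  | PVar x => [x]
  | PCon c ls => concat (map pat_vars ls)
  end.

Fixpoint expr_vars (e : expr) : list var :=
  match e with
  | EVar x => [x]
  | ECon _ es => concat (map expr_vars es)
  | EFun _ => []
  | EIf a b c => expr_vars a ++ expr_vars b ++ expr_vars c
  | EChoose es => concat (map expr_vars es)
  | EPair a b => expr_vars a ++ expr_vars b
  | EApp a b => expr_vars a ++ expr_vars b
  end.

Fixpoint expr_fsyms (e : expr) : list fsym :=
  match e with
  | EVar _ => []
  | ECon _ es => concat (map expr_fsyms es)
  | EFun f => [f]
  | EIf a b c => expr_fsyms a ++ expr_fsyms b ++ expr_fsyms c
  | EChoose es => concat (map expr_fsyms es)
  | EPair a b => expr_fsyms a ++ expr_fsyms b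
  | EApp a b => expr_fsyms a ++ expr_fsyms b
  end.

Fixpoint val_fsyms (v : val) : list fsym :=
  match v with
  | VCon _ vs => concat (map val_fsyms vs)
  | VPair a b => val_fsyms a ++ val_fsyms b
  | VFun f vs => f :: concat (map val_fsyms vs)
  end.

Definition lhs_vars (cl : clause) : list var := concat (map pat_vars (cl_lhs cl)).

Definition lhs_expr (cl : clause) : expr :=
  fold_left (fun e l => EApp e (pat_expr l)) (cl_lhs cl) (EFun (cl_f cl)).

(* strict sub-expressions (s |> t); the paper's  c s1 .. sm |> t  iff some si |>= t *)
Fixpoint strict_sub (e : expr) : list expr :=
  match e with
  | EVar _ | EFun _ => []
  | ECon _ es => concat (map (fun s => s :: strict_sub s) es)
  | EIf a b c => (a :: strict_sub a) ++ (b :: strict_sub b) ++ (c :: strict_sub c)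
  | EChoose es => concat (map (fun s => s :: strict_sub s) es)
  | EPair a b => (a :: strict_sub a) ++ (b :: strict_sub b)
  | EApp a b => strict_sub a ++ (b :: strict_sub b)
  end.

(* s |>= t  iff  In t (subexprs s) *)
Definition subexprs (e : expr) : list expr := e :: strict_sub e.

Fixpoint is_data_expr (e : expr) : Prop :=
  match e with
  | ECon _ es => (fix all (l : list expr) : Prop :=
                    match l with [] => True | s :: l' => is_data_expr s /\ all l' end) es
  | EPair a b => is_data_expr a /\ is_data_expr b
  | _ => False
  end.

Definition cons_free_clause (cl : clause) : Prop :=
  forall t, In t (subexprs (cl_rhs cl)) ->
    (exists c es, t = ECon c es) ->
    is_data_expr t \/ exists l, In l (cl_lhs cl) /\ In t (subexprs (pat_expr l)).

Section Typing.
Variable dt : fsym -> Ty.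

Inductive has_type (G : var -> Ty) : expr -> Ty -> Prop :=
| T_Var x : has_type G (EVar x) (G x)
| T_Con c es : has_types G es (con_args c) -> has_type G (ECon c es) (TSort (con_res c))
| T_Fun f : has_type G (EFun f) (dt f)
| T_If a b c t : has_type G a (TSort (@s_bool Sg)) -> has_type G b t -> has_type G c t ->
    has_type G (EIf a b c) t
| T_Choose es t : (forall s, In s es -> has_type G s t) -> has_type G (EChoose es) t
| T_Pair a b s t : has_type G a s -> has_type G b t -> has_type G (EPair a b) (TProd s t)
| T_App a b s t : has_type G a (TArrow s t) -> has_type G b s -> has_type G (EApp a b) t
with has_types (G : var -> Ty) : list expr -> list Ty -> Prop :=
| Ts_nil : has_types G [] []
| Ts_cons e es t ts : has_type G e t -> has_types G es ts -> has_types G (e :: es) (t :: ts).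

Definition clause_typed (G : var -> Ty) (cl : clause) : Prop :=
  exists t, has_type G (lhs_expr cl) t /\ has_type G (cl_rhs cl) t.

Definition wf_clause (cl : clause) : Prop :=
  NoDup (lhs_vars cl) /\
  (forall x, In x (expr_vars (cl_rhs cl)) -> In x (lhs_vars cl)) /\
  exists G, clause_typed G cl.

Definition wf_program (p : program) : Prop :=
  (forall cl, In cl p -> wf_clause cl) /\
  (forall cl1 cl2, In cl1 p -> In cl2 p -> cl_f cl1 = cl_f cl2 ->
     length (cl_lhs cl1) = length (cl_lhs cl2)).

Definition data_order (p : program) (K : nat) : Prop :=
  forall cl, In cl p -> exists G, clause_typed G cl /\
    forall x, In x (lhs_vars cl) -> ord (G x) <= K.

Variable ar : fsym -> nat.
Inductive val_type : val -> Ty -> Prop :=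
| VT_Con c vs : vals_type vs (con_args c) -> val_type (VCon c vs) (TSort (con_res c))
| VT_Pair v w s t : val_type v s -> val_type w t -> val_type (VPair v w) (TProd s t)
| VT_Fun f vs ts t : vals_type vs ts -> length vs < ar f -> dt f = arrows ts t ->
    val_type (VFun f vs) t
with vals_type : list val -> list Ty -> Prop :=
| VTs_nil : vals_type [] []
| VTs_cons v vs t ts : val_type v t -> vals_type vs ts -> vals_type (v :: vs) (t :: ts).
End Typing.

Definition arity (p : program) (f : fsym) : nat :=
  match find (fun cl => Nat.eqb (cl_f cl) f) p with
  | Some cl => length (cl_lhs cl)
  | None => 0
  end.

Fixpoint pat_subst (g : var -> val) (l : pat) : val :=
  match l with
  | PVar x => g x
  | PCon c ls => VCon c (map (pat_subst g) ls)
  end.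

Definition clause_matches (cl : clause) (f : fsym) (vs : list val) : Prop :=
  cl_f cl = f /\ exists g, map (pat_subst g) (cl_lhs cl) = vs.

Inductive eval (p : program) : (var -> val) -> expr -> val -> Prop :=
| E_Var g x : eval p g (EVar x) (g x)
| E_Fun g f w : call p f [] w -> eval p g (EFun f) w
| E_Con g c es bs : eval_list p g es bs -> eval p g (ECon c es) (VCon c bs)
| E_Pair g a b v w : eval p g a v -> eval p g b w -> eval p g (EPair a b) (VPair v w)
| E_Choose g es s w : In s es -> eval p g s w -> eval p g (EChoose es) w
| E_IfT g a b c w : eval p g a (VCon (@c_true Sg) []) -> eval p g b w -> eval p g (EIf a b c) w
| E_IfF g a b c w : eval p g a (VCon (@c_false Sg) []) -> eval p g c w -> eval p g (EIf a b c) w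
| E_App g a b f vs v w : eval p g a (VFun f vs) -> eval p g b v -> call p f (vs ++ [v]) w ->
    eval p g (EApp a b) w
with eval_list (p : program) : (var -> val) -> list expr -> list val -> Prop :=
| EL_nil g : eval_list p g [] []
| EL_cons g e es v vs : eval p g e v -> eval_list p g es vs -> eval_list p g (e :: es) (v :: vs)
with call (p : program) : fsym -> list val -> val -> Prop :=
| C_Partial f vs : length vs < arity p f -> call p f vs (VFun f vs)
| C_Clause p1 cl p2 f vs g w :
    p = p1 ++ cl :: p2 ->
    cl_f cl = f ->
    map (pat_subst g) (cl_lhs cl) = vs ->
    (forall cl', In cl' p1 -> ~ clause_matches cl' f vs) ->   (* first matching clause *)
    eval p g (cl_rhs cl) w ->
    call p f vs w.

Fixpoint blist (cs : list bool) : val :=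
  match cs with
  | [] => VCon (@c_nil Sg) []
  | b :: cs' => VCon (@c_cons Sg) [VCon (if b then @c_true Sg else @c_false Sg) []; blist cs']
  end.

Definition vtrue : val := VCon (@c_true Sg) [].
Definition vfalse : val := VCon (@c_false Sg) [].

Record module := mkModule {
  m_alpha : Ty;
  m_D : list fsym;
  m_dtype : fsym -> Ty;
  m_seed : fsym; m_pred : fsym; m_zero : fsym;
  m_A : nat -> val -> Prop;
  m_interp : nat -> val -> nat;     (* [[.]]^n_pi, used on A^n_pi *)
  m_prog : program
}.

Definition counting_module (P : nat -> nat) (m : module) : Prop :=
  let p := m_prog m in
  let dt := m_dtype m in
  let a := m_alpha m in
  let L := TSort (@s_list Sg) in
  NoDup [m_seed m; m_pred m; m_zero m] /\
  In (m_seed m) (m_D m) /\ In (m_pred m) (m_D m) /\ In (m_zero m) (m_D m) /\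
  dt (m_seed m) = TArrow L a /\
  dt (m_pred m) = TArrow L (TArrow a a) /\
  dt (m_zero m) = TArrow L (TArrow a (TSort (@s_bool Sg))) /\
  wf_program dt p /\
  (forall cl, In cl p -> cons_free_clause cl) /\
  (forall cl, In cl p -> In (cl_f cl) (m_D m) /\
                         forall f, In f (expr_fsyms (cl_rhs cl)) -> In f (m_D m)) /\
  (forall n v, m_A m n v ->
     val_type dt (arity p) v a /\ forall f, In f (val_fsyms v) -> In f (m_D m)) /\
  forall n (cs : list bool), length cs = n ->
    (exists v, call p (m_seed m) [blist cs] v /\
               (forall v', call p (m_seed m) [blist cs] v' -> v' = v) /\
               m_A m n v /\ m_interp m n v = P n - 1) /\
    (forall v i, m_A m n v -> m_interp m n v = i -> i > 0 ->
       exists w, call p (m_pred m) [blist cs; v] w /\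
                 (forall w', call p (m_pred m) [blist cs; v] w' -> w' = w) /\
                 m_A m n w /\ m_interp m n w = i - 1) /\
    (forall v, m_A m n v ->
       (call p (m_zero m) [blist cs; v] vtrue <-> m_interp m n v = 0) /\
       (call p (m_zero m) [blist cs; v] vfalse <-> m_interp m n v > 0)).

Definition module_data_order (m : module) (K : nat) : Prop :=
  data_order (m_dtype m) (m_prog m) K.

End Lang.

(* Main.v *)
Require Import Defs.
From Stdlib Require Import List Arith Lia Bool Classical.
Import ListNotations.

Set Implicit Arguments.

Section Gen.
Variable Sg : signature.
Implicit Types (p : program Sg) (g : var -> val Sg) (w v : val Sg) (vs : list (val Sg)) (e : expr Sg) (es : list (expr Sg)) (cl : clause Sg) (f : fsym).

Scheme eval_mut := Induction for eval Sort Prop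
with eval_list_mut := Induction for eval_list Sort Prop
with call_mut := Induction for call Sort Prop.
Combined Scheme eval_call_mut from eval_mut, eval_list_mut, call_mut.

Definition same_len (p : program Sg) := forall cl1 cl2, In cl1 p -> In cl2 p ->
  cl_f cl1 = cl_f cl2 -> length (cl_lhs cl1) = length (cl_lhs cl2).

Lemma arity_eq p cl : same_len p -> In cl p -> arity p (cl_f cl) = length (cl_lhs cl).
Proof.
  intros Hs Hin. unfold arity.
  destruct (find (fun c : clause Sg => Nat.eqb (cl_f c) (cl_f cl)) p) eqn:E.
  - apply find_some in E as [Hin' Heq]. apply Nat.eqb_eq in Heq. apply Hs; auto.
  - eapply find_none in E; eauto. rewrite Nat.eqb_refl in E. discriminate.
Qed.

Lemma arity_pos_in p f : 0 < arity p f -> exists cl, In cl p /\ cl_f cl = f.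
Proof.
  unfold arity. destruct (find (fun c : clause Sg => Nat.eqb (cl_f c) f) p) eqn:E; [|lia].
  apply find_some in E as [Hin Heq]. apply Nat.eqb_eq in Heq. eauto.
Qed.

Lemma call_len p f vs w : same_len p -> call p f vs w -> length vs <= arity p f.
Proof.
  intros Hs H. destruct H as [f vs Hl|p1 cl p2 f vs g w Hp Hf Hm Hfst Hev].
  - lia.
  - subst f vs. rewrite arity_eq; auto. rewrite length_map; auto.
    rewrite Hp. apply in_or_app. right; left; auto.
Qed.

Lemma call_partial p f vs w : same_len p -> length vs < arity p f -> call p f vs w -> w = VFun f vs.
Proof.
  intros Hs Hl H. destruct H as [f vs Hl'|p1 cl p2 f vs g w Hp Hf Hm Hfst Hev]; auto.
  exfalso. subst f vs. rewrite arity_eq in Hl. rewrite length_map in Hl. lia. auto.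
  rewrite Hp. apply in_or_app. right; left; auto.
Qed.

Lemma eval_app_inv p g a b w : eval p g (EApp a b) w <->
  exists f vs v, eval p g a (VFun f vs) /\ eval p g b v /\ call p f (vs ++ [v]) w.
Proof.
  split.
  - intros H. inversion H; subst. eauto 10.
  - intros (f & vs & v & H1 & H2 & H3). econstructor; eauto.
Qed.

Lemma el_cons p g e es vs : eval_list p g (e :: es) vs <->
  exists v vs', vs = v :: vs' /\ eval p g e v /\ eval_list p g es vs'.
Proof.
  split.
  - intros H. inversion H; subst. eauto.
  - intros (v & vs' & -> & H1 & H2). constructor; auto.
Qed.

Lemma el_nil p g vs : eval_list p g [] vs <-> vs = [].
Proof. split. intros H; inversion H; auto. intros ->; constructor. Qed.

Ltac elinv H := repeat match type of H with
  | eval_list _ _ (_ :: _) _ => let v := fresh "v" in let vs := fresh "vs" in let H' := fresh "H" in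
       apply el_cons in H as (v & vs & -> & H' & H)
  | eval_list _ _ [] _ => apply el_nil in H; subst
  end.

Definition apps (e : expr Sg) (es : list (expr Sg)) := fold_left (fun a b => EApp a b) es e.

Lemma eval_list_length p g es vs : eval_list p g es vs -> length vs = length es.
Proof. induction 1; simpl; auto. Qed.

Lemma eval_list_app p g es e vs' : eval_list p g (es ++ [e]) vs' <->
  exists vs v, vs' = vs ++ [v] /\ eval_list p g es vs /\ eval p g e v.
Proof.
  revert vs'; induction es as [|a es IH]; intros vs'; simpl; split.
  - intros H. inversion H; subst. inversion H5; subst. exists [], v. repeat split; auto; constructor.
  - intros (vs & v & -> & H1 & H2). inversion H1; subst. simpl. constructor; auto; constructor.
  - intros H. inversion H; subst. apply IH in H5 as (vs1 & v1 & -> & H1 & H2).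
    exists (v :: vs1), v1. repeat split; auto. constructor; auto.
  - intros (vs & v & -> & H1 & H2). inversion H1; subst. simpl. constructor; auto.
    apply IH. eauto.
Qed.

Lemma eval_fun_partial p g f w : same_len p -> 0 < arity p f ->
  (eval p g (EFun Sg f) w <-> w = VFun f []).
Proof.
  intros Hs Ha; split; intros H.
  - inversion H; subst. eapply call_partial; eauto.
  - subst. constructor. constructor. auto.
Qed.

Lemma apps_partial p g f es w : same_len p -> length es < arity p f ->
  (eval p g (apps (EFun Sg f) es) w <-> exists vs, eval_list p g es vs /\ w = VFun f vs).
Proof.
  intros Hs. revert w. induction es as [|e es IH] using rev_ind; intros w Hl.
  - simpl. rewrite eval_fun_partial; auto. split.
    + intros ->. exists []. split; auto. constructor.
    + intros (vs & H & ->). inversion H; auto.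
  - unfold apps. rewrite fold_left_app. simpl. fold (apps (EFun Sg f) es).
    rewrite length_app in Hl. simpl in Hl. split.
    + intros H. apply eval_app_inv in H as (f' & vs' & v & H3 & H4 & H6).
      apply IH in H3 as (vs1 & H1 & H2); [|lia]. injection H2 as -> ->.
      apply call_partial in H6; auto.
      * subst. exists (vs1 ++ [v]). split; auto. apply eval_list_app. eauto.
      * rewrite length_app. apply eval_list_length in H1. simpl. lia.
    + intros (vs & H & ->). apply eval_list_app in H as (vs1 & v & -> & H1 & H2).
      econstructor; eauto.
      * apply IH; [lia|]. eauto.
      * constructor. rewrite length_app. apply eval_list_length in H1. simpl. lia.
Qed.

Lemma apps_full p g f es e w : same_len p -> length es < arity p f ->
  (eval p g (apps (EFun Sg f) (es ++ [e])) w <->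
   exists vs v, eval_list p g es vs /\ eval p g e v /\ call p f (vs ++ [v]) w).
Proof.
  intros Hs Hl. unfold apps. rewrite fold_left_app. simpl. fold (apps (EFun Sg f) es).
  split.
  - intros H. apply eval_app_inv in H as (f' & vs' & v & H3 & H4 & H6).
    apply apps_partial in H3 as (vs1 & H1 & H2); auto.
    injection H2 as -> ->. eauto.
  - intros (vs & v & H1 & H2 & H3). econstructor; eauto. apply apps_partial; eauto.
Qed.

Lemma app1 p g f e1 w : same_len p -> 0 < arity p f ->
  (eval p g (apps (EFun Sg f) [e1]) w <-> exists v1, eval p g e1 v1 /\ call p f [v1] w).
Proof.
  intros Hs Hl. rewrite (@apps_full p g f [] e1 w); auto. split.
  - intros (vs & v & H1 & H2 & H3). elinv H1. eauto.
  - intros (v & H1 & H2). exists [], v. repeat split; auto. constructor.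
Qed.

Lemma app2 p g f e1 e2 w : same_len p -> 1 < arity p f ->
  (eval p g (apps (EFun Sg f) [e1; e2]) w <->
   exists v1 v2, eval p g e1 v1 /\ eval p g e2 v2 /\ call p f [v1; v2] w).
Proof.
  intros Hs Hl. rewrite (@apps_full p g f [e1] e2 w); auto. split.
  - intros (vs & v & H1 & H2 & H3). elinv H1. eauto.
  - intros (v1 & v2 & H1 & H2 & H3). exists [v1], v2. repeat split; auto.
    repeat constructor; auto.
Qed.

Lemma app3 p g f e1 e2 e3 w : same_len p -> 2 < arity p f ->
  (eval p g (apps (EFun Sg f) [e1; e2; e3]) w <->
   exists v1 v2 v3, eval p g e1 v1 /\ eval p g e2 v2 /\ eval p g e3 v3 /\ call p f [v1; v2; v3] w).
Proof.
  intros Hs Hl. rewrite (@apps_full p g f [e1; e2] e3 w); auto. split.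
  - intros (vs & v & H1 & H2 & H3). elinv H1. eauto 10.
  - intros (v1 & v2 & v3 & H1 & H2 & H3 & H4). exists [v1; v2], v3. repeat split; auto.
    repeat constructor; auto.
Qed.

Lemma app4 p g f e1 e2 e3 e4 w : same_len p -> 3 < arity p f ->
  (eval p g (apps (EFun Sg f) [e1; e2; e3; e4]) w <->
   exists v1 v2 v3 v4, eval p g e1 v1 /\ eval p g e2 v2 /\ eval p g e3 v3 /\ eval p g e4 v4 /\
     call p f [v1; v2; v3; v4] w).
Proof.
  intros Hs Hl. rewrite (@apps_full p g f [e1; e2; e3] e4 w); auto. split.
  - intros (vs & v & H1 & H2 & H3). elinv H1. eauto 12.
  - intros (v1 & v2 & v3 & v4 & H1 & H2 & H3 & H4 & H5). exists [v1; v2; v3], v4.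
    repeat split; auto. repeat constructor; auto.
Qed.

Lemma papp1 p g f e1 w : same_len p -> 1 < arity p f ->
  (eval p g (apps (EFun Sg f) [e1]) w <-> exists v1, eval p g e1 v1 /\ w = VFun f [v1]).
Proof.
  intros Hs Hl. rewrite apps_partial; auto. split.
  - intros (vs & H1 & ->). elinv H1. eauto.
  - intros (v & H & ->). exists [v]. split; auto. repeat constructor; auto.
Qed.

Lemma papp2 p g f e1 e2 w : same_len p -> 2 < arity p f ->
  (eval p g (apps (EFun Sg f) [e1; e2]) w <->
   exists v1 v2, eval p g e1 v1 /\ eval p g e2 v2 /\ w = VFun f [v1; v2]).
Proof.
  intros Hs Hl. rewrite apps_partial; auto. split.
  - intros (vs & H1 & ->). elinv H1. eauto.
  - intros (v1 & v2 & H1 & H2 & ->). exists [v1; v2]. split; auto. repeat constructor; auto.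
Qed.

Scheme ht_mut := Induction for has_type Sort Prop
with hts_mut := Induction for has_types Sort Prop.

Lemma ht_transport (dt1 dt2 : fsym -> ty (sort Sg)) G :
  (forall e t, has_type dt1 G e t -> (forall f, In f (expr_fsyms e) -> dt2 f = dt1 f) ->
     has_type dt2 G e t) /\
  (forall es ts, has_types dt1 G es ts -> (forall f, In f (concat (map (@expr_fsyms Sg) es)) -> dt2 f = dt1 f) ->
     has_types dt2 G es ts).
Proof.
  split.
  - apply (@ht_mut Sg dt1 G (fun e t _ => (forall f, In f (expr_fsyms e) -> dt2 f = dt1 f) -> has_type dt2 G e t)
      (fun es ts _ => (forall f, In f (concat (map (@expr_fsyms Sg) es)) -> dt2 f = dt1 f) -> has_types dt2 G es ts));
    simpl; intros.
    + constructor.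
    + constructor. auto.
    + rewrite <- H. constructor. left; auto.
    + constructor; [apply H|apply H0|apply H1]; intros; apply H2; repeat (apply in_or_app; try (left; assumption); right); auto.
    + constructor. intros s0 Hs. apply H; auto. intros f Hf. apply H0.
      apply in_concat. exists (expr_fsyms s0). split; auto. apply in_map; auto.
    + constructor; [apply H|apply H0]; intros; apply H1; apply in_or_app; auto.
    + econstructor; [apply H|apply H0]; intros; apply H1; apply in_or_app; auto.
    + constructor.
    + constructor; [apply H|apply H0]; intros; apply H1; apply in_or_app; auto.
  - apply (@hts_mut Sg dt1 G (fun e t _ => (forall f, In f (expr_fsyms e) -> dt2 f = dt1 f) -> has_type dt2 G e t)
      (fun es ts _ => (forall f, In f (concat (map (@expr_fsyms Sg) es)) -> dt2 f = dt1 f) -> has_types dt2 G es ts));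
    simpl; intros.
    + constructor.
    + constructor. auto.
    + rewrite <- H. constructor. left; auto.
    + constructor; [apply H|apply H0|apply H1]; intros; apply H2; repeat (apply in_or_app; try (left; assumption); right); auto.
    + constructor. intros s0 Hs. apply H; auto. intros f Hf. apply H0.
      apply in_concat. exists (expr_fsyms s0). split; auto. apply in_map; auto.
    + constructor; [apply H|apply H0]; intros; apply H1; apply in_or_app; auto.
    + econstructor; [apply H|apply H0]; intros; apply H1; apply in_or_app; auto.
    + constructor.
    + constructor; [apply H|apply H0]; intros; apply H1; apply in_or_app; auto.
Qed.

Lemma fs_pat : forall l : pat Sg, expr_fsyms (pat_expr l) = [].
Proof.
  fix IH 1. intros [x|c ls]; simpl; auto.
  induction ls as [|l ls IHls]; simpl; auto. rewrite IH. simpl. auto.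
Qed.

Lemma fs_lhs cl : forall f, In f (expr_fsyms (lhs_expr cl)) -> f = cl_f cl.
Proof.
  unfold lhs_expr. assert (H : forall e0, (forall f, In f (expr_fsyms e0) -> f = cl_f cl) ->
    forall f, In f (expr_fsyms (fold_left (fun e l => EApp e (pat_expr l)) (cl_lhs cl) e0)) -> f = cl_f cl).
  { induction (cl_lhs cl) as [|l ls IH]; simpl; auto. intros e0 H0. apply IH.
    simpl. rewrite fs_pat, app_nil_r. auto. }
  apply H. simpl. intros f [<-|[]]; auto.
Qed.

End Gen.

Section Comb.
Variable Sg : signature.
Implicit Types (g : var -> val Sg) (w v : val Sg) (vs : list (val Sg)) (e : expr Sg) (es : list (expr Sg)) (cl : clause Sg) (f : fsym).
Variables (p ours : program Sg) (D : list fsym).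
Hypothesis HpD : forall cl, In cl p -> In (cl_f cl) D /\ incl (expr_fsyms (cl_rhs cl)) D.
Hypothesis Hpv : forall cl, In cl p -> forall x, In x (expr_vars (cl_rhs cl)) -> In x (lhs_vars cl).
Hypothesis HoD : forall cl, In cl ours -> ~ In (cl_f cl) D.
Let q := ours ++ p.

Lemma find_app_none {A} (P : A -> bool) l1 l2 : (forall x, In x l1 -> P x = false) ->
  find P (l1 ++ l2) = find P l2.
Proof. induction l1; simpl; intros H; auto. rewrite H; auto. Qed.

Lemma arity_comb f : In f D -> arity q f = arity p f.
Proof.
  intros Hf. unfold arity, q. rewrite find_app_none; auto.
  intros x Hx. apply Nat.eqb_neq. intros <-. eapply HoD; eauto.
Qed.

Lemma in_concat_map_incl {A B} (h : A -> list B) a l : In a l -> incl (h a) (concat (map h l)).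
Proof.
  induction l; simpl; [intros []|intros [->|H]]; auto using incl_appl, incl_refl, incl_appr.
Qed.

Lemma p_to_q :
  (forall g e w, eval p g e w -> eval q g e w) /\
  (forall g es vs, eval_list p g es vs -> eval_list q g es vs) /\
  (forall f vs w, call p f vs w -> call q f vs w).
Proof.
  apply (@eval_call_mut Sg p (fun g e w _ => eval q g e w) (fun g es vs _ => eval_list q g es vs)
     (fun f vs w _ => call q f vs w)); intros; try (econstructor; eauto; fail).
  - apply C_Partial. destruct (arity_pos_in p f) as (cl & Hcl & <-); [lia|].
    rewrite arity_comb; auto. apply HpD; auto.
  - apply C_Clause with (p1 := ours ++ p1) (cl := cl) (p2 := p2) (g := g); auto.
    + unfold q. rewrite e. rewrite app_assoc. auto.
    + intros cl' Hin Hm. apply in_app_or in Hin as [Hin|Hin].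
      * destruct Hm as [Hf _]. apply (HoD cl' Hin). rewrite Hf, <- e0. apply HpD. rewrite e. apply in_or_app; right; left; auto.
      * apply (n cl' Hin Hm).
Qed.

Lemma split_ours p1 cl p2 : ours ++ p = p1 ++ cl :: p2 -> ~ In cl ours ->
  exists p1', p1 = ours ++ p1' /\ p = p1' ++ cl :: p2.
Proof.
  revert p1. induction ours as [|a o IH]; intros p1 H Hn.
  - simpl in H. exists p1. auto.
  - destruct p1 as [|a' p1]; simpl in H; injection H as -> H.
    + exfalso. apply Hn. left; auto.
    + destruct (IH (fun cl H => HoD cl (or_intror H)) p1 H) as (p1' & -> & Hp).
      * intros Hc. apply Hn. right; auto.
      * exists p1'. auto.
Qed.

Lemma pat_vars_fsyms g : forall l x, In x (pat_vars l) ->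
  incl (val_fsyms (g x)) (val_fsyms (pat_subst g l)).
Proof.
  fix IH 1. intros [y|c ls] x Hx; simpl in *.
  - destruct Hx as [<-|[]]. apply incl_refl.
  - induction ls as [|l ls IHls]; simpl in *; [contradiction|].
    apply in_app_or in Hx as [Hx|Hx].
    + apply incl_appl. apply IH; auto.
    + apply incl_appr. apply IHls; auto.
Qed.

Lemma q_to_p :
  (forall g e w, eval q g e w -> incl (expr_fsyms e) D ->
     (forall x, In x (expr_vars e) -> incl (val_fsyms (g x)) D) ->
     eval p g e w /\ incl (val_fsyms w) D) /\
  (forall g es vs, eval_list q g es vs -> incl (concat (map (@expr_fsyms Sg) es)) D ->
     (forall x, In x (concat (map (@expr_vars Sg) es)) -> incl (val_fsyms (g x)) D) ->
     eval_list p g es vs /\ incl (concat (map (@val_fsyms Sg) vs)) D) /\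
  (forall f vs w, call q f vs w -> In f D -> incl (concat (map (@val_fsyms Sg) vs)) D ->
     call p f vs w /\ incl (val_fsyms w) D).
Proof.
  apply (@eval_call_mut Sg q
    (fun g e w _ => incl (expr_fsyms e) D ->
     (forall x, In x (expr_vars e) -> incl (val_fsyms (g x)) D) ->
     eval p g e w /\ incl (val_fsyms w) D)
    (fun g es vs _ => incl (concat (map (@expr_fsyms Sg) es)) D ->
     (forall x, In x (concat (map (@expr_vars Sg) es)) -> incl (val_fsyms (g x)) D) ->
     eval_list p g es vs /\ incl (concat (map (@val_fsyms Sg) vs)) D)
    (fun f vs w _ => In f D -> incl (concat (map (@val_fsyms Sg) vs)) D ->
     call p f vs w /\ incl (val_fsyms w) D)); simpl; intros.
  - split. constructor. apply H0. left; auto.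
  - destruct H as [H2 H3]; auto. apply H0. left; auto. apply incl_nil_l. split; auto. constructor; auto.
  - destruct H as [H2 H3]; auto. split; auto. constructor; auto.
  - apply incl_app_inv in H1 as [Ha Hb].
    destruct H as [H3 H4]; auto. intros; apply H2; apply in_or_app; auto.
    destruct H0 as [H5 H6]; auto. intros; apply H2; apply in_or_app; auto.
    split. constructor; auto. apply incl_app; auto.
  - destruct H as [H3 H4].
    + eapply incl_tran; [|eauto]. apply in_concat_map_incl; auto.
    + intros x Hx. apply H1. eapply in_concat_map_incl; eauto.
    + split; auto. econstructor; eauto.
  - apply incl_app_inv in H1 as [Ha Hb]. apply incl_app_inv in Hb as [Hb Hc].
    destruct H as [H3 H4]; auto. intros; apply H2; apply in_or_app; auto.
    destruct H0 as [H5 H6]; auto. intros; apply H2; apply in_or_app; right; apply in_or_app; auto.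
    split; auto. apply E_IfT; auto.
  - apply incl_app_inv in H1 as [Ha Hb]. apply incl_app_inv in Hb as [Hb Hc].
    destruct H as [H3 H4]; auto. intros; apply H2; apply in_or_app; auto.
    destruct H0 as [H5 H6]; auto. intros; apply H2; apply in_or_app; right; apply in_or_app; auto.
    split; auto. apply E_IfF; auto.
  - apply incl_app_inv in H2 as [Ha Hb].
    destruct H as [H4 H5]; auto. intros; apply H3; apply in_or_app; auto.
    destruct H0 as [H6 H7]; auto. intros; apply H3; apply in_or_app; auto.
    simpl in H5. destruct H1 as [H8 H9].
    + apply H5. left; auto.
    + rewrite map_app, concat_app. simpl. rewrite app_nil_r. apply incl_app; auto.
      intros a' Ha'. apply H5. right; auto.
    + split; auto. econstructor; eauto.
  - split; [apply EL_nil | intros ? []].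
  - apply incl_app_inv in H1 as [Ha Hb].
    destruct H as [H3 H4]; auto. intros; apply H2; apply in_or_app; auto.
    destruct H0 as [H5 H6]; auto. intros; apply H2; apply in_or_app; auto.
    split. constructor; auto. apply incl_app; auto.
  - split. constructor. unfold q in l. rewrite <- arity_comb; auto.
    intros a' [<-|Ha']; auto.
  - assert (Hcl : ~ In cl ours).
    { intros Hc. apply (HoD cl Hc). subst f. auto. }
    destruct (split_ours p1 cl p2 e Hcl) as (p1' & -> & Hp).
    assert (Hclp : In cl p). { rewrite Hp. apply in_or_app; right; left; auto. }
    destruct H as [H3 H4].
    + apply HpD; auto.
    + intros x Hx. apply Hpv in Hx; auto. unfold lhs_vars in Hx.
      apply in_concat in Hx as (xs & Hxs & Hx). apply in_map_iff in Hxs as (l & <- & Hl).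
      eapply incl_tran; [apply pat_vars_fsyms; eauto|].
      eapply incl_tran; [|apply H1]. subst vs. apply in_concat_map_incl. apply in_map; auto.
    + split; auto. eapply C_Clause; eauto. intros cl' Hin. apply n. apply in_or_app; auto.
Qed.

End Comb.

Section Cl.
Variable Sg : signature.
Implicit Types (p q : program Sg) (g : var -> val Sg) (w v : val Sg) (vs : list (val Sg)) (e : expr Sg) (es : list (expr Sg)) (cl : clause Sg) (f : fsym).

Lemma first_occ q cl : In cl q -> (forall cl', In cl' q -> cl_f cl' = cl_f cl -> cl' = cl) ->
  exists p1 p2, q = p1 ++ cl :: p2 /\ forall cl', In cl' p1 -> cl_f cl' <> cl_f cl.
Proof.
  induction q as [|a q IH]; simpl; intros Hin Hu; [contradiction|].
  destruct (Nat.eq_dec (cl_f a) (cl_f cl)) as [E|E].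
  - exists [], q. rewrite (Hu a (or_introl eq_refl) E). split; auto.
  - destruct Hin as [->|Hin]; [contradiction|].
    destruct IH as (p1 & p2 & -> & H); auto.
    exists (a :: p1), p2. split; auto. intros cl' [<-|Hc]; auto.
Qed.

Lemma map_pvar g s k : map (pat_subst g) (map (@PVar Sg) (seq s k)) = map g (seq s k).
Proof. revert s; induction k; simpl; intros; auto. f_equal; auto. Qed.

Lemma nth_map_seq0 {A} (g : nat -> A) k i d : i < k -> nth i (map g (seq 0 k)) d = g i.
Proof.
  intros H. rewrite nth_indep with (d' := g 0) by (rewrite length_map, length_seq; lia).
  rewrite map_nth, seq_nth; auto.
Qed.

Lemma call_clause_iff q cl k vs w d : same_len q -> In cl q ->
  (forall cl', In cl' q -> cl_f cl' = cl_f cl -> cl' = cl) ->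
  cl_lhs cl = map (@PVar Sg) (seq 0 k) -> length vs = k ->
  (call q (cl_f cl) vs w <->
   exists g, (forall i, i < k -> g i = nth i vs d) /\ eval q g (cl_rhs cl) w).
Proof.
  intros Hs Hin Hu Hl Hk. split.
  - intros H. assert (Har : arity q (cl_f cl) = k) by (rewrite arity_eq, Hl, length_map, length_seq; auto).
    remember (cl_f cl) as f0 eqn:Ef. remember vs as vs0 eqn:Ev.
    destruct H as [f vs' Hlt|p1 cl0 p2 f vs' g w' Hq Hf Hm Hfst Hev]; subst f vs'.
    + rewrite Har in Hlt. lia.
    + assert (cl0 = cl). { apply Hu; auto. rewrite Hq. apply in_or_app; right; left; auto. }
      subst cl0. exists g. split; auto.
      intros i Hi. rewrite <- Hm, Hl, map_pvar, nth_map_seq0; auto.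
  - intros (g & Hg & Hev).
    destruct (@first_occ q cl Hin Hu) as (p1 & p2 & Hq & Hfst).
    eapply C_Clause; eauto.
    + rewrite Hl, map_pvar. apply nth_ext with (d := d) (d' := d).
      * rewrite length_map, length_seq; auto.
      * intros i Hi. rewrite length_map, length_seq in Hi. rewrite nth_map_seq0; auto.
    + intros cl' H' [Hf _]. apply (Hfst cl' H'); auto.
Qed.

End Cl.

Unset Implicit Arguments.

Lemma div2_pred_even h : 0 < h -> Nat.div2 (2 * h - 1) = h - 1.
Proof.
  intros H. destruct h; [lia|]. replace (2 * S h - 1) with (S (2 * h)) by lia.
  rewrite Nat.div2_succ_double. lia.
Qed.

Lemma bit_pred_low j : forall k, 0 < k -> (forall t, t < j -> Nat.testbit k t = false) ->
  Nat.testbit (k - 1) j = negb (Nat.testbit k j).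
Proof.
  induction j as [|j IH]; intros k Hk Ht.
  - simpl. destruct k; [lia|]. rewrite Nat.odd_succ. simpl (S k - 1). rewrite Nat.sub_0_r.
    rewrite <- Nat.negb_odd, negb_involutive. auto.
  - simpl. destruct (Nat.Even_or_Odd k) as [[h ->]|[h ->]].
    + rewrite Nat.div2_double. rewrite div2_pred_even by lia.
      apply IH; [lia|]. intros t Ht'. specialize (Ht (S t)). rewrite Nat.double_bits_succ in Ht. apply Ht; lia.
    + exfalso. specialize (Ht 0). rewrite Nat.testbit_odd_0 in Ht. discriminate Ht. lia.
Qed.

Lemma bit_pred_nlow j : forall k, 0 < k -> (exists t, t < j /\ Nat.testbit k t = true) ->
  Nat.testbit (k - 1) j = Nat.testbit k j.
Proof.
  induction j as [|j IH]; intros k Hk (t & Ht & Hb); [lia|].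
  simpl. destruct (Nat.Even_or_Odd k) as [[h ->]|[h ->]].
  - rewrite Nat.div2_double. rewrite div2_pred_even by lia.
    destruct t as [|t].
    + rewrite Nat.testbit_even_0 in Hb. discriminate.
    + rewrite Nat.double_bits_succ in Hb. apply IH; [lia|]. exists t. split; auto. lia.
  - replace (2 * h + 1 - 1) with (2 * h) by lia. rewrite Nat.div2_double.
    rewrite Nat.add_1_r, Nat.div2_succ_double. auto.
Qed.

Lemma bits_zero m : forall k, k < 2 ^ m -> (forall t, t < m -> Nat.testbit k t = false) -> k = 0.
Proof.
  induction m as [|m IH]; intros k Hk Ht; simpl in *; [lia|].
  destruct (Nat.Even_or_Odd k) as [[h ->]|[h ->]].
  - assert (h = 0); [|lia]. apply IH; [lia|]. intros t Ht'. specialize (Ht (S t)). rewrite Nat.double_bits_succ in Ht. apply Ht; lia.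
  - exfalso. specialize (Ht 0). rewrite Nat.testbit_odd_0 in Ht. discriminate Ht. lia.
Qed.

Lemma bits_nonzero m k : 0 < k -> k < 2 ^ m -> exists t, t < m /\ Nat.testbit k t = true.
Proof.
  intros H1 H2. destruct (List.existsb (Nat.testbit k) (List.seq 0 m)) eqn:E.
  - apply List.existsb_exists in E as (t & Ht & Hb). apply List.in_seq in Ht. exists t. split; auto. lia.
  - exfalso. assert (k = 0); [|lia]. apply (bits_zero m); auto. intros t Ht.
    destruct (Nat.testbit k t) eqn:Eb; auto. assert (List.existsb (Nat.testbit k) (List.seq 0 m) = true); [|congruence].
    apply List.existsb_exists. exists t. split; auto. apply List.in_seq. lia.
Qed.

Lemma bits_ones m t : t < m -> Nat.testbit (2 ^ m - 1) t = true.
Proof.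
  intros H. replace (2 ^ m - 1) with (Nat.ones m).
  - apply Nat.ones_spec_low. auto.
  - rewrite Nat.ones_equiv. lia.
Qed.

Section Main.
Variable Sg : signature.
Variable m : module Sg.
Variable P : nat -> nat.
Hypothesis Hcm : counting_module P m.
Hypothesis Harp : 1 < arity (m_prog m) (m_pred m).
Variable b : nat.
Hypothesis Hb : forall k, ~ In (k + b) (m_D m).
Variable K : nat.
Hypothesis HK : K <= 1.
Hypothesis Hdo : module_data_order m K.
Hypothesis Hord : ord (m_alpha m) <= 1.

Local Notation p := (m_prog m).
Local Notation D := (m_D m).
Local Notation s0 := (m_seed m).
Local Notation p0 := (m_pred m).
Local Notation z0 := (m_zero m).
Local Notation Ap := (m_A m).
Local Notation ip := (m_interp m).
Local Notation vt := (vtrue Sg).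
Local Notation vf := (vfalse Sg).
Local Notation VV := (EVar Sg).
Local Notation EF := (EFun Sg).
Local Notation BOT := (EChoose (@nil (expr Sg))).
Local Notation TT := (ECon (@c_true Sg) []).
Local Notation FF := (ECon (@c_false Sg) []).

Arguments apps : simpl never.

Definition sym k := k + b.
Arguments sym : simpl never.

Lemma sym_inj i j : sym i = sym j -> i = j.
Proof. unfold sym. lia. Qed.

Lemma sym_notD k : ~ In (sym k) D.
Proof. apply Hb. Qed.

Definition z0e (e1 e2 : expr Sg) := apps (EF z0) [e1; e2].
Definition p0e (e1 e2 : expr Sg) := apps (EF p0) [e1; e2].
Definition s0e (e1 : expr Sg) := apps (EF s0) [e1].
Definition hase (e1 e2 e3 e4 : expr Sg) := apps (EF (sym 8)) [e1; e2; e3; e4].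

Definition rhs (k : nat) : expr Sg :=
  match k with
  | 0 => apps (EF (sym 3)) [VV 0]
  | 1 => apps (EF (sym 4)) [VV 0; VV 1]
  | 2 => EChoose [apps (EF (sym 11)) [VV 0; VV 1; s0e (VV 0)]; apps (EF (sym 12)) [VV 0; VV 1]]
  | 3 => EIf (VV 1) (apps (EF (sym 10)) [VV 0; s0e (VV 0)]) BOT
  | 4 => apps (EF (sym 5)) [VV 0; VV 1; VV 2; apps (EF (sym 10)) [VV 0; s0e (VV 0)]]
  | 5 => EChoose [EIf (hase (VV 0) (VV 1) (VV 2) (VV 3))
                      (EIf (apps (EF (sym 6)) [VV 0; VV 1; VV 3]) (VV 3) BOT) BOT;
                  EIf (hase (VV 0) (VV 1) (EIf (VV 2) FF TT) (VV 3))
                      (EIf (apps (EF (sym 11)) [VV 0; VV 1; p0e (VV 0) (VV 3)]) (VV 3) BOT) BOT]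
  | 6 => apps (EF (sym 7)) [VV 0; VV 1; apps (EF (sym 10)) [VV 0; p0e (VV 0) (VV 2)]]
  | 7 => EIf (hase (VV 0) (VV 1) TT (VV 2)) TT BOT
  | 8 => apps (EF (sym 9)) [VV 0; EApp (VV 1) (VV 2); VV 3]
  | 9 => EIf (z0e (VV 0) (VV 1)) (EIf (z0e (VV 0) (VV 2)) TT BOT)
            (EIf (z0e (VV 0) (VV 2)) BOT (apps (EF (sym 9)) [VV 0; p0e (VV 0) (VV 1); p0e (VV 0) (VV 2)]))
  | 10 => EIf (z0e (VV 0) (VV 1)) BOT (EChoose [VV 1; apps (EF (sym 10)) [VV 0; p0e (VV 0) (VV 1)]])
  | 11 => EIf (z0e (VV 0) (VV 2)) TT
            (EIf (hase (VV 0) (VV 1) FF (VV 2)) (apps (EF (sym 11)) [VV 0; VV 1; p0e (VV 0) (VV 2)]) BOT)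
  | 12 => EIf (z0e (VV 0) (EApp (VV 1) TT)) FF FF
  | _ => BOT
  end.

Definition ars (k : nat) : nat :=
  match k with
  | 0 => 1 | 1 => 2 | 2 => 2 | 3 => 2 | 4 => 3 | 5 => 4 | 6 => 3 | 7 => 3 | 8 => 4
  | 9 => 3 | 10 => 2 | 11 => 3 | 12 => 2 | _ => 0 end.

Definition ocl (k : nat) : clause Sg := mkClause (sym k) (map (PVar Sg) (seq 0 (ars k))) (rhs k).
Definition ours : program Sg := map ocl (seq 0 13).
Definition q : program Sg := ours ++ p.

Lemma in_ours cl : In cl ours <-> exists k, k < 13 /\ cl = ocl k.
Proof.
  unfold ours. rewrite in_map_iff. split.
  - intros (k & <- & Hk). apply in_seq in Hk. exists k. split; auto. lia.
  - intros (k & Hk & ->). exists k. split; auto. apply in_seq. lia.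
Qed.

Lemma Hwf : wf_program (m_dtype m) p.
Proof. destruct Hcm as (_ & _ & _ & _ & _ & _ & _ & H & _). exact H. Qed.

Lemma HpD : forall cl, In cl p -> In (cl_f cl) D /\ incl (expr_fsyms (cl_rhs cl)) D.
Proof.
  destruct Hcm as (_ & _ & _ & _ & _ & _ & _ & _ & _ & H & _). intros cl Hcl.
  destruct (H cl Hcl) as [H1 H2]. split; auto.
Qed.

Lemma Hpv : forall cl, In cl p -> forall x, In x (expr_vars (cl_rhs cl)) -> In x (lhs_vars cl).
Proof.
  intros cl Hcl. destruct Hwf as [H _]. destruct (H cl Hcl) as (_ & H2 & _). auto.
Qed.

Lemma HoD : forall cl, In cl ours -> ~ In (cl_f cl) D.
Proof. intros cl H. apply in_ours in H as (k & _ & ->). apply sym_notD. Qed.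

Lemma HAfs n v : Ap n v -> incl (val_fsyms v) D.
Proof.
  destruct Hcm as (_ & _ & _ & _ & _ & _ & _ & _ & _ & _ & H & _). intros Hv. intros x Hx. apply (proj2 (H n v Hv)); auto.
Qed.

Lemma Hsem n cs : length cs = n ->
    (exists v, call p s0 [blist Sg cs] v /\
               (forall v', call p s0 [blist Sg cs] v' -> v' = v) /\
               Ap n v /\ ip n v = P n - 1) /\
    (forall v i, Ap n v -> ip n v = i -> i > 0 ->
       exists w, call p p0 [blist Sg cs; v] w /\
                 (forall w', call p p0 [blist Sg cs; v] w' -> w' = w) /\
                 Ap n w /\ ip n w = i - 1) /\
    (forall v, Ap n v ->
       (call p z0 [blist Sg cs; v] vt <-> ip n v = 0) /\
       (call p z0 [blist Sg cs; v] vf <-> ip n v > 0)).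
Proof. destruct Hcm as (_ & _ & _ & _ & _ & _ & _ & _ & _ & _ & _ & H). apply H. Qed.

Lemma same_len_p : same_len p.
Proof. destruct Hwf as [_ H]. intros ? ? ? ? ?. apply H; auto. Qed.

Lemma same_len_q : same_len q.
Proof.
  intros cl1 cl2 H1 H2 Hf. unfold q in *. apply in_app_or in H1, H2.
  destruct H1 as [H1|H1]; destruct H2 as [H2|H2].
  - apply in_ours in H1 as (k1 & _ & ->). apply in_ours in H2 as (k2 & _ & ->).
    simpl in Hf. apply sym_inj in Hf. subst. auto.
  - exfalso. apply (HoD _ H1). rewrite Hf. apply HpD; auto.
  - exfalso. apply (HoD _ H2). rewrite <- Hf. apply HpD; auto.
  - apply same_len_p; auto.
Qed.

Lemma callk k vs w : k < 13 -> length vs = ars k ->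
  (call q (sym k) vs w <-> exists g, (forall i, i < ars k -> g i = nth i vs vt) /\ eval q g (rhs k) w).
Proof.
  intros Hk Hl. apply (@call_clause_iff Sg q (ocl k) (ars k) vs w vt); auto.
  - apply same_len_q.
  - unfold q. apply in_or_app. left. apply in_ours. eauto.
  - intros cl' Hin Hf. unfold q in Hin. apply in_app_or in Hin as [Hin|Hin].
    + apply in_ours in Hin as (k' & _ & ->). simpl in Hf. apply sym_inj in Hf. subst; auto.
    + exfalso. apply (@sym_notD k). simpl in Hf. rewrite <- Hf. apply HpD; auto.
Qed.

Lemma arity_sym k : k < 13 -> arity q (sym k) = ars k.
Proof.
  intros Hk. rewrite <- (length_seq (ars k) 0), <- (length_map (PVar Sg)).
  apply (@arity_eq Sg q (ocl k)). apply same_len_q.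
  unfold q. apply in_or_app. left. apply in_ours. eauto.
Qed.

Lemma arity_D f : In f D -> arity q f = arity p f.
Proof. intros Hf. unfold q. apply (@arity_comb Sg p ours D HoD f Hf). Qed.

Lemma callq_p f vs w : In f D -> incl (concat (map (@val_fsyms Sg) vs)) D ->
  (call q f vs w <-> call p f vs w).
Proof.
  intros Hf Hvs. split.
  - intros H. destruct (@q_to_p Sg p ours D HpD Hpv HoD) as (_ & _ & H3).
    apply H3; auto.
  - intros H. destruct (@p_to_q Sg p ours D HpD HoD) as (_ & _ & H3). apply H3; auto.
Qed.

Lemma blist_fs cs : val_fsyms (blist Sg cs) = [].
Proof. induction cs as [|[] cs IH]; simpl; auto; rewrite IH; auto. Qed.

Lemma seed_spec n cs : length cs = n -> exists sv, Ap n sv /\ ip n sv = P n - 1 /\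
  forall w, call q s0 [blist Sg cs] w <-> w = sv.
Proof.
  intros Hl. destruct (@Hsem n cs Hl) as ((v & H1 & H2 & H3 & H4) & _ & _).
  exists v. repeat split; auto.
  - intros H. apply H2. apply callq_p in H; auto.
    + destruct Hcm as (_ & H' & _). auto.
    + simpl. rewrite blist_fs. intros ? [].
  - intros ->. apply callq_p; auto.
    + destruct Hcm as (_ & H' & _). auto.
    + simpl. rewrite blist_fs. intros ? [].
Qed.

Lemma pred_spec n cs v : length cs = n -> Ap n v -> 0 < ip n v -> exists pv, Ap n pv /\
  ip n pv = ip n v - 1 /\ forall w, call q p0 [blist Sg cs; v] w <-> w = pv.
Proof.
  intros Hl Hv Hi. destruct (@Hsem n cs Hl) as (_ & H & _).
  destruct (H v (ip n v) Hv eq_refl Hi) as (w & H1 & H2 & H3 & H4).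
  assert (Hd : In p0 D) by (destruct Hcm as (_ & _ & H' & _); auto).
  assert (Hfs : incl (concat (map (@val_fsyms Sg) [blist Sg cs; v])) D).
  { simpl. rewrite blist_fs, app_nil_r. simpl. apply HAfs with n; auto. }
  exists w. repeat split; auto.
  - intros H5. apply H2. apply callq_p in H5; auto.
  - intros ->. apply callq_p; auto.
Qed.

Lemma zero_spec n cs v : length cs = n -> Ap n v ->
  (call q z0 [blist Sg cs; v] vt <-> ip n v = 0) /\
  (call q z0 [blist Sg cs; v] vf <-> 0 < ip n v).
Proof.
  intros Hl Hv. destruct (@Hsem n cs Hl) as (_ & _ & H). destruct (H v Hv) as [H1 H2].
  assert (Hd : In z0 D) by (destruct Hcm as (_ & _ & _ & H' & _); auto).
  assert (Hfs : incl (concat (map (@val_fsyms Sg) [blist Sg cs; v])) D).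
  { simpl. rewrite blist_fs, app_nil_r. simpl. apply HAfs with n; auto. }
  rewrite !callq_p; auto.
Qed.

Lemma arq_s0 : 0 < arity q s0.
Proof.
  assert (Hd : In s0 D) by (destruct Hcm as (_ & H' & _); auto).
  rewrite arity_D; auto. destruct (@Hsem 0 [] eq_refl) as ((v & H1 & _) & _).
  apply call_len in H1; [simpl in H1; lia|]. apply same_len_p.
Qed.

Lemma arq_p0 : 1 < arity q p0.
Proof.
  assert (Hd : In p0 D) by (destruct Hcm as (_ & _ & H' & _); auto).
  rewrite arity_D; auto.
Qed.

Lemma arq_z0 : 1 < arity q z0.
Proof.
  assert (Hd : In z0 D) by (destruct Hcm as (_ & _ & _ & H' & _); auto).
  rewrite arity_D; auto. destruct (@Hsem 0 [] eq_refl) as ((v & _ & _ & Hv & _) & _ & H).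
  destruct (H v Hv) as [[_ H1] [_ H2]].
  destruct (ip 0 v) eqn:E.
  - specialize (H1 eq_refl). apply call_len in H1; [simpl in H1; lia|]. apply same_len_p.
  - assert (H3 : call p z0 [blist Sg []; v] vf) by (apply H2; lia).
    apply call_len in H3; [simpl in H3; lia|]. apply same_len_p.
Qed.

Lemma vt_vf : vt <> vf.
Proof. intros H. injection H. apply c_true_false. Qed.

Definition env (vs : list (val Sg)) : var -> val Sg := fun i => nth i vs vt.

Lemma ev_var g x w : eval q g (VV x) w <-> w = g x.
Proof. split; intros H; [inversion H; auto | subst; constructor]. Qed.

Lemma ev_con0 g c w : eval q g (ECon c []) w <-> w = VCon c [].
Proof.
  split; intros H.
  - inversion H; subst. match goal with H : eval_list _ _ _ _ |- _ => apply el_nil in H end. subst. auto.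
  - subst. constructor. constructor.
Qed.

Lemma ev_bot g w : ~ eval q g BOT w.
Proof. intros H. inversion H; subst. match goal with H : In _ [] |- _ => destruct H end. Qed.

Lemma ev_ch2 g x y w : eval q g (EChoose [x; y]) w <-> eval q g x w \/ eval q g y w.
Proof.
  split; intros H.
  - inversion H; subst. match goal with H : In _ _ |- _ => destruct H as [<-|[<-|[]]]; auto end.
  - destruct H as [H|H]; econstructor; eauto; simpl; auto.
Qed.

Lemma ev_if g c x y w : eval q g (EIf c x y) w <->
  (eval q g c vt /\ eval q g x w) \/ (eval q g c vf /\ eval q g y w).
Proof.
  split; intros H.
  - inversion H; subst; auto.
  - destruct H as [[H1 H2]|[H1 H2]]; [apply E_IfT|apply E_IfF]; auto.
Qed.

Definition callv (F v w : val Sg) : Prop :=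
  match F with VFun f vs => call q f (vs ++ [v]) w | _ => False end.

Lemma ev_appv g x e w : eval q g (EApp (VV x) e) w <-> exists v, eval q g e v /\ callv (g x) v w.
Proof.
  rewrite eval_app_inv. split.
  - intros (f & vs & v & H1 & H2 & H3). apply ev_var in H1. exists v. rewrite <- H1. auto.
  - intros (v & H1 & H2). unfold callv in H2. destruct (g x) eqn:E; try contradiction.
    exists f, args, v. repeat split; auto. apply ev_var. auto.
Qed.

Lemma ev_s0 n cs g : length cs = n -> g 0 = blist Sg cs -> exists sv, Ap n sv /\ ip n sv = P n - 1 /\
  forall w, eval q g (s0e (VV 0)) w <-> w = sv.
Proof.
  intros Hl G0. destruct (seed_spec _ _ Hl) as (sv & H1 & H2 & H3). exists sv. split; [auto|split; [auto|]].
  intros w. unfold s0e. rewrite app1; [|apply same_len_q|apply arq_s0]. rewrite <- H3. split.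
  - intros (v & Hv & Hc). apply ev_var in Hv. subst. congruence.
  - intros Hc. exists (g 0). split. apply ev_var; auto. congruence.
Qed.

Lemma ev_p0 n cs g x v : length cs = n -> g 0 = blist Sg cs -> g x = v -> Ap n v -> 0 < ip n v ->
  exists pv, Ap n pv /\ ip n pv = ip n v - 1 /\ forall w, eval q g (p0e (VV 0) (VV x)) w <-> w = pv.
Proof.
  intros Hl G0 Gx Hv Hi. destruct (pred_spec _ _ _ Hl Hv Hi) as (pv & H1 & H2 & H3). exists pv. split; [auto|split; [auto|]].
  intros w. unfold p0e. rewrite app2; [|apply same_len_q|apply arq_p0]. rewrite <- H3. split.
  - intros (v1 & v2 & H4 & H5 & Hc). apply ev_var in H4. apply ev_var in H5. subst. congruence.
  - intros Hc. exists (g 0), (g x). split. apply ev_var; auto. split. apply ev_var; auto. congruence.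
Qed.

Lemma ev_z0 g e w : eval q g (z0e (VV 0) e) w <-> exists v, eval q g e v /\ call q z0 [g 0; v] w.
Proof.
  unfold z0e. rewrite app2; [|apply same_len_q|apply arq_z0]. split.
  - intros (v1 & v2 & H1 & H2 & H3). apply ev_var in H1. subst. eauto.
  - intros (v & H1 & H2). exists (g 0), v. repeat split; auto. apply ev_var; auto.
Qed.

Lemma ev_ifz n cs g x v X Y w : length cs = n -> g 0 = blist Sg cs -> g x = v -> Ap n v ->
  (eval q g (EIf (z0e (VV 0) (VV x)) X Y) w <->
   (ip n v = 0 /\ eval q g X w) \/ (0 < ip n v /\ eval q g Y w)).
Proof.
  intros Hl G0 Gx Hv. destruct (zero_spec _ _ _ Hl Hv) as [Z1 Z2]. rewrite ev_if, !ev_z0.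
  split; [intros [[(v' & H1 & H2) H3]|[(v' & H1 & H2) H3]]|intros [[H1 H3]|[H1 H3]]].
  - left. apply ev_var in H1. subst. rewrite G0 in H2. split; auto. apply Z1; auto.
  - right. apply ev_var in H1. subst. rewrite G0 in H2. split; auto. apply Z2; auto.
  - left. split; auto. exists v. split. apply ev_var; auto. rewrite G0. apply Z1; auto.
  - right. split; auto. exists v. split. apply ev_var; auto. rewrite G0. apply Z2; auto.
Qed.

Ltac ar := first [rewrite arity_sym by lia; simpl; lia | apply arq_s0 | apply arq_p0 | apply arq_z0].
Ltac ifzI Hl x Hv := unshelve eapply (proj2 (ev_ifz _ _ _ x _ _ _ _ Hl _ _ Hv)); try reflexivity.
Ltac gv Hg i := let H := fresh "G" in assert (H := Hg i ltac:(simpl; lia)); simpl in H.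

Lemma L_eq n cs : length cs = n -> forall k i j w, ip n i = k -> Ap n i -> Ap n j ->
  (call q (sym 9) [blist Sg cs; i; j] w <-> w = vt /\ ip n i = ip n j).
Proof.
  intros Hl k. induction k as [|k IH]; intros i j w Hk Hi Hj;
    (rewrite callk; [|lia|reflexivity]); split.
  - intros (g & Hg & H). gv Hg 0. gv Hg 1. gv Hg 2. simpl rhs in H.
    apply (ev_ifz _ _ _ _ _ _ _ _ Hl G G0 Hi) in H as [[Hi0 H]|[Hi0 H]]; [|lia].
    apply (ev_ifz _ _ _ _ _ _ _ _ Hl G G1 Hj) in H as [[Hj0 H]|[Hj0 H]].
    + apply ev_con0 in H. split; [auto|lia].
    + exfalso; eapply ev_bot; eauto.
  - intros [-> Heq]. exists (env [blist Sg cs; i; j]). split; [intros ii Hii; reflexivity|].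
    simpl rhs. ifzI Hl 1 Hi. left. split; [lia|].
    ifzI Hl 2 Hj. left. split; [lia|].
    apply ev_con0. reflexivity.
  - intros (g & Hg & H). gv Hg 0. gv Hg 1. gv Hg 2. simpl rhs in H.
    apply (ev_ifz _ _ _ _ _ _ _ _ Hl G G0 Hi) in H as [[Hi0 H]|[Hi0 H]]; [lia|].
    apply (ev_ifz _ _ _ _ _ _ _ _ Hl G G1 Hj) in H as [[Hj0 H]|[Hj0 H]].
    + exfalso; eapply ev_bot; eauto.
    + apply app3 in H; [|apply same_len_q|ar].
      destruct H as (v1 & v2 & v3 & H1 & H2 & H3 & H4).
      apply ev_var in H1. rewrite G in H1. subst v1.
      destruct (ev_p0 _ _ _ _ _ Hl G G0 Hi Hi0) as (pi & Api & Ipi & Epi).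
      destruct (ev_p0 _ _ _ _ _ Hl G G1 Hj Hj0) as (pj & Apj & Ipj & Epj).
      apply Epi in H2. apply Epj in H3. subst v2 v3.
      apply (IH pi pj w) in H4; [|lia|auto|auto]. destruct H4 as [-> H4]. split; auto; lia.
  - intros [-> Heq]. exists (env [blist Sg cs; i; j]). split; [intros ii Hii; reflexivity|].
    simpl rhs. ifzI Hl 1 Hi. right. split; [lia|].
    ifzI Hl 2 Hj. right. split; [lia|].
    destruct (ev_p0 _ _ (env [blist Sg cs; i; j]) 1 i Hl eq_refl eq_refl Hi ltac:(lia)) as (pi & Api & Ipi & Epi).
    destruct (ev_p0 _ _ (env [blist Sg cs; i; j]) 2 j Hl eq_refl eq_refl Hj ltac:(lia)) as (pj & Apj & Ipj & Epj).
    apply app3; [apply same_len_q|ar|]. exists (blist Sg cs), pi, pj.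
    split; [apply ev_var; reflexivity|]. split; [apply Epi; auto|]. split; [apply Epj; auto|].
    apply IH; try split; auto; lia.
Qed.

Definition uq g e a := forall v, eval q g e v <-> v = a.

Lemma uq_var g x : uq g (VV x) (g x).
Proof. intros v. apply ev_var. Qed.

Lemma uq_con0 g c : uq g (ECon c []) (VCon c []).
Proof. intros v. apply ev_con0. Qed.

Lemma U1 g f e1 a1 w : 0 < arity q f -> uq g e1 a1 ->
  (eval q g (apps (EF f) [e1]) w <-> call q f [a1] w).
Proof.
  intros Ha H1. rewrite app1; [|apply same_len_q|auto]. split.
  - intros (v1 & E1 & C). apply H1 in E1. subst. auto.
  - intros C. exists a1. split; auto. apply H1; auto.
Qed.

Lemma U2 g f e1 e2 a1 a2 w : 1 < arity q f -> uq g e1 a1 -> uq g e2 a2 ->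
  (eval q g (apps (EF f) [e1; e2]) w <-> call q f [a1; a2] w).
Proof.
  intros Ha H1 H2. rewrite app2; [|apply same_len_q|auto]. split.
  - intros (v1 & v2 & E1 & E2 & C). apply H1 in E1. apply H2 in E2. subst. auto.
  - intros C. exists a1, a2. split; [apply H1; auto|]. split; [apply H2; auto|auto].
Qed.

Lemma U3 g f e1 e2 e3 a1 a2 a3 w : 2 < arity q f -> uq g e1 a1 -> uq g e2 a2 -> uq g e3 a3 ->
  (eval q g (apps (EF f) [e1; e2; e3]) w <-> call q f [a1; a2; a3] w).
Proof.
  intros Ha H1 H2 H3. rewrite app3; [|apply same_len_q|auto]. split.
  - intros (v1 & v2 & v3 & E1 & E2 & E3 & C). apply H1 in E1. apply H2 in E2. apply H3 in E3. subst. auto.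
  - intros C. exists a1, a2, a3. split; [apply H1; auto|]. split; [apply H2; auto|].
    split; [apply H3; auto|auto].
Qed.

Lemma U4 g f e1 e2 e3 e4 a1 a2 a3 a4 w : 3 < arity q f -> uq g e1 a1 -> uq g e2 a2 -> uq g e3 a3 ->
  uq g e4 a4 ->
  (eval q g (apps (EF f) [e1; e2; e3; e4]) w <-> call q f [a1; a2; a3; a4] w).
Proof.
  intros Ha H1 H2 H3 H4. rewrite app4; [|apply same_len_q|auto]. split.
  - intros (v1 & v2 & v3 & v4 & E1 & E2 & E3 & E4 & C). apply H1 in E1. apply H2 in E2.
    apply H3 in E3. apply H4 in E4. subst. auto.
  - intros C. exists a1, a2, a3, a4. split; [apply H1; auto|]. split; [apply H2; auto|].
    split; [apply H3; auto|]. split; [apply H4; auto|auto].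
Qed.

Definition vb (x : bool) : val Sg := if x then vt else vf.

Lemma vb_inj x y : vb x = vb y -> x = y.
Proof. destruct x, y; simpl; auto; intros H; exfalso; apply vt_vf; congruence. Qed.

Definition Rep n F k := k < 2 ^ (P n - 1) /\
  (forall x w, callv F (vb x) w -> Ap n w /\ 1 <= ip n w <= P n - 1 /\ Nat.testbit k (ip n w - 1) = x) /\
  (forall x t, 1 <= t <= P n - 1 -> Nat.testbit k (t - 1) = x ->
     exists w, callv F (vb x) w /\ Ap n w /\ ip n w = t).

Lemma L_has n cs F k i x w : length cs = n -> Rep n F k -> Ap n i ->
  (call q (sym 8) [blist Sg cs; F; vb x; i] w <->
   w = vt /\ 1 <= ip n i <= P n - 1 /\ Nat.testbit k (ip n i - 1) = x).
Proof.
  intros Hl (Rb & Rs & Rc) Hi. rewrite callk; [|lia|reflexivity]. split.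
  - intros (g & Hg & H). gv Hg 0. gv Hg 1. gv Hg 2. gv Hg 3. simpl rhs in H.
    apply app3 in H; [|apply same_len_q|ar].
    destruct H as (v1 & v2 & v3 & H1 & H2 & H3 & H4).
    apply ev_var in H1. apply ev_var in H3. subst v1 v3.
    apply ev_appv in H2 as (v & Ev & Cv). apply ev_var in Ev. rewrite G0 in Cv. rewrite G1 in Ev. subst v.
    destruct (Rs _ _ Cv) as (Av2 & Rg & Bt).
    rewrite G, G2 in H4. apply (L_eq n cs Hl (ip n v2) v2 i w eq_refl Av2 Hi) in H4 as [-> E].
    rewrite <- E. auto.
  - intros (-> & Rg & Bt). destruct (Rc x (ip n i) Rg Bt) as (w' & Cw & Aw & Iw).
    exists (env [blist Sg cs; F; vb x; i]). split; [intros ii Hii; reflexivity|].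
    simpl rhs. apply app3; [apply same_len_q|ar|]. exists (blist Sg cs), w', i.
    split; [apply ev_var; reflexivity|]. split.
    + apply ev_appv. exists (vb x). split; [apply ev_var; reflexivity|]. exact Cw.
    + split; [apply ev_var; reflexivity|]. apply (L_eq n cs Hl (ip n w') w' i vt eq_refl Aw Hi).
      split; auto.
Qed.

Lemma L_pos_sound n cs : length cs = n -> forall k i w, ip n i = k -> Ap n i ->
  call q (sym 10) [blist Sg cs; i] w -> Ap n w /\ 1 <= ip n w <= ip n i.
Proof.
  intros Hl k. induction k as [|k IH]; intros i w Hk Hi H;
    (rewrite callk in H; [|lia|reflexivity]); destruct H as (g & Hg & H); gv Hg 0; gv Hg 1;
    simpl rhs in H; apply (ev_ifz _ _ _ _ _ _ _ _ Hl G G0 Hi) in H as [[Hi0 H]|[Hi0 H]];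
    try (exfalso; eapply ev_bot; eauto; fail); try lia.
  apply ev_ch2 in H as [H|H].
  - apply ev_var in H. subst. split; auto; lia.
  - destruct (ev_p0 _ _ _ _ _ Hl G G0 Hi Hi0) as (pi & Api & Ipi & Epi).
    apply (U2 g (sym 10) _ _ (blist Sg cs) pi) in H; [| ar | rewrite <- G; apply uq_var | exact Epi].
    apply (IH pi w) in H; [|lia|auto]. destruct H as (Aw & H). split; auto; lia.
Qed.

Lemma L_pos_comp n cs : length cs = n -> forall k i t, ip n i = k -> Ap n i -> 1 <= t <= ip n i ->
  exists w, call q (sym 10) [blist Sg cs; i] w /\ Ap n w /\ ip n w = t.
Proof.
  intros Hl k. induction k as [|k IH]; intros i t Hk Hi Ht; [lia|].
  destruct (ev_p0 _ _ (env [blist Sg cs; i]) 1 i Hl eq_refl eq_refl Hi ltac:(lia)) as (pi & Api & Ipi & Epi).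
  assert (Hw : exists w, eval q (env [blist Sg cs; i]) (EChoose [VV 1; apps (EF (sym 10)) [VV 0; p0e (VV 0) (VV 1)]]) w
                 /\ Ap n w /\ ip n w = t).
  { destruct (Nat.eq_dec t (ip n i)) as [E|E].
    - exists i. split; [|auto]. apply ev_ch2. left. apply ev_var. reflexivity.
    - destruct (IH pi t) as (w & C & Aw & Iw); [lia|auto|lia|].
      exists w. split; [|auto]. apply ev_ch2. right.
      apply (U2 _ (sym 10) _ _ (blist Sg cs) pi); [ar|apply uq_var|exact Epi|auto]. }
  destruct Hw as (w & Ew & Aw & Iw). exists w. split; [|auto].
  rewrite callk; [|lia|reflexivity]. exists (env [blist Sg cs; i]). split; [intros ii Hii; reflexivity|].
  simpl rhs. ifzI Hl 1 Hi. right. split; [lia|auto].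
Qed.

Lemma ev_hase n cs g F k y i ex x w : length cs = n -> g 0 = blist Sg cs -> g 1 = F -> g y = i ->
  uq g ex (vb x) -> Rep n F k -> Ap n i ->
  (eval q g (hase (VV 0) (VV 1) ex (VV y)) w <->
   w = vt /\ 1 <= ip n i <= P n - 1 /\ Nat.testbit k (ip n i - 1) = x).
Proof.
  intros Hl G0 G1 Gy Ux R Hi. unfold hase.
  rewrite (U4 g (sym 8) _ _ _ _ (blist Sg cs) F (vb x) i); [|ar| rewrite <- G0; apply uq_var
    | rewrite <- G1; apply uq_var | auto | rewrite <- Gy; apply uq_var].
  apply L_has; auto.
Qed.

Lemma ev_ifhas n cs g F k y i ex x X w : length cs = n -> g 0 = blist Sg cs -> g 1 = F -> g y = i ->
  uq g ex (vb x) -> Rep n F k -> Ap n i ->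
  (eval q g (EIf (hase (VV 0) (VV 1) ex (VV y)) X BOT) w <->
   (1 <= ip n i <= P n - 1 /\ Nat.testbit k (ip n i - 1) = x) /\ eval q g X w).
Proof.
  intros Hl G0 G1 Gy Ux R Hi. rewrite ev_if. rewrite !(ev_hase n cs g F k y i ex x); auto. split.
  - intros [[(_ & H1) H2]|[(H1 & _) H2]]; auto. exfalso; apply vt_vf; auto.
  - intros (H1 & H2). left. auto.
Qed.

Lemma uq_vb_true g : uq g TT (vb true).
Proof. apply uq_con0. Qed.
Lemma uq_vb_false g : uq g FF (vb false).
Proof. apply uq_con0. Qed.

Lemma L_allz n cs F k : length cs = n -> Rep n F k -> forall kk i w, ip n i = kk -> Ap n i ->
  ip n i <= P n - 1 ->
  (call q (sym 11) [blist Sg cs; F; i] w <->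
   w = vt /\ forall t, 1 <= t <= ip n i -> Nat.testbit k (t - 1) = false).
Proof.
  intros Hl R kk. induction kk as [|kk IH]; intros i w Hk Hi HiP;
    (rewrite callk; [|lia|reflexivity]); split.
  - intros (g & Hg & H). gv Hg 0. gv Hg 1. gv Hg 2. simpl rhs in H.
    apply (ev_ifz _ _ _ _ _ _ _ _ Hl G G1 Hi) in H as [[Hi0 H]|[Hi0 H]]; [|lia].
    apply ev_con0 in H. split; auto. intros; lia.
  - intros (-> & _). exists (env [blist Sg cs; F; i]). split; [intros ii Hii; reflexivity|].
    simpl rhs. ifzI Hl 2 Hi. left. split; [lia|]. apply ev_con0; reflexivity.
  - intros (g & Hg & H). gv Hg 0. gv Hg 1. gv Hg 2. simpl rhs in H.
    apply (ev_ifz _ _ _ _ _ _ _ _ Hl G G1 Hi) in H as [[Hi0 H]|[Hi0 H]]; [lia|].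
    apply (ev_ifhas n cs g F k 2 i FF false) in H; auto; [|apply uq_vb_false].
    destruct H as ((Rg & Bt) & H).
    destruct (ev_p0 _ _ _ _ _ Hl G G1 Hi Hi0) as (pi & Api & Ipi & Epi).
    apply (U3 g (sym 11) _ _ _ (blist Sg cs) F pi) in H; [|ar|rewrite <- G; apply uq_var
      |rewrite <- G0; apply uq_var|exact Epi].
    apply (IH pi w) in H; [|lia|auto|lia]. destruct H as (-> & H). split; auto.
    intros t Ht. destruct (Nat.eq_dec t (ip n i)) as [->|E]; auto. apply H. lia.
  - intros (-> & Hall). exists (env [blist Sg cs; F; i]). split; [intros ii Hii; reflexivity|].
    simpl rhs. ifzI Hl 2 Hi. right. split; [lia|].
    apply (ev_ifhas n cs _ F k 2 i FF false); auto; [apply uq_vb_false|]. split.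
    + split; [lia|]. apply Hall. lia.
    + destruct (ev_p0 _ _ (env [blist Sg cs; F; i]) 2 i Hl eq_refl eq_refl Hi ltac:(lia)) as (pi & Api & Ipi & Epi).
      apply (U3 _ (sym 11) _ _ _ (blist Sg cs) F pi); [ar|apply uq_var|apply uq_var|exact Epi|].
      apply IH; [lia|auto|lia|]. split; auto. intros t Ht. apply Hall. lia.
Qed.

Lemma L_nlow2 n cs F k j w : length cs = n -> Rep n F k -> Ap n j ->
  (call q (sym 7) [blist Sg cs; F; j] w <->
   w = vt /\ 1 <= ip n j <= P n - 1 /\ Nat.testbit k (ip n j - 1) = true).
Proof.
  intros Hl R Hj. rewrite callk; [|lia|reflexivity]. split.
  - intros (g & Hg & H). gv Hg 0. gv Hg 1. gv Hg 2. simpl rhs in H.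
    apply (ev_ifhas n cs g F k 2 j TT true) in H; auto; [|apply uq_vb_true].
    destruct H as (C & H). apply ev_con0 in H. auto.
  - intros (-> & C). exists (env [blist Sg cs; F; j]). split; [intros ii Hii; reflexivity|].
    simpl rhs. apply (ev_ifhas n cs _ F k 2 j TT true); auto; [apply uq_vb_true|].
    split; auto. apply ev_con0; reflexivity.
Qed.

Lemma L_nlow n cs F k j w : length cs = n -> Rep n F k -> Ap n j -> 1 <= ip n j <= P n - 1 ->
  (call q (sym 6) [blist Sg cs; F; j] w <->
   w = vt /\ exists t, 1 <= t < ip n j /\ Nat.testbit k (t - 1) = true).
Proof.
  intros Hl R Hj Rg. rewrite callk; [|lia|reflexivity].
  destruct (ev_p0 _ _ (env [blist Sg cs; F; j]) 2 j Hl eq_refl eq_refl Hj ltac:(lia)) as (pj & Apj & Ipj & Epj).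
  split.
  - intros (g & Hg & H). gv Hg 0. gv Hg 1. gv Hg 2. simpl rhs in H.
    destruct (ev_p0 _ _ _ _ _ Hl G G1 Hj ltac:(lia)) as (pj' & Apj' & Ipj' & Epj').
    apply app3 in H; [|apply same_len_q|ar].
    destruct H as (v1 & v2 & v3 & H1 & H2 & H3 & H4).
    apply ev_var in H1. apply ev_var in H2. rewrite G in H1. rewrite G0 in H2. subst v1 v2.
    apply (U2 g (sym 10) _ _ (blist Sg cs) pj') in H3; [|ar|rewrite <- G; apply uq_var|exact Epj'].
    apply (L_pos_sound n cs Hl _ pj' v3 eq_refl Apj') in H3 as (Av3 & Iv3).
    apply (L_nlow2 n cs F k v3 w Hl R Av3) in H4 as (-> & Iv3' & Bt).
    split; auto. exists (ip n v3). split; [lia|auto].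
  - intros (-> & t & Ht & Bt).
    destruct (L_pos_comp n cs Hl _ pj t eq_refl Apj ltac:(lia)) as (v3 & C3 & Av3 & Iv3).
    exists (env [blist Sg cs; F; j]). split; [intros ii Hii; reflexivity|].
    simpl rhs. apply app3; [apply same_len_q|ar|]. exists (blist Sg cs), F, v3.
    split; [apply ev_var; reflexivity|]. split; [apply ev_var; reflexivity|]. split.
    + apply (U2 _ (sym 10) _ _ (blist Sg cs) pj); [ar|apply uq_var|exact Epj|auto].
    + apply (L_nlow2 n cs F k v3 vt Hl R Av3). split; auto. rewrite Iv3. split; [lia|auto].
Qed.

Lemma dec_low k J : (exists t, t < J /\ Nat.testbit k t = true) \/ (forall t, t < J -> Nat.testbit k t = false).
Proof.
  destruct (existsb (Nat.testbit k) (seq 0 J)) eqn:E.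
  - left. apply existsb_exists in E as (t & Ht & Hb'). apply in_seq in Ht. exists t. split; auto. lia.
  - right. intros t Ht. destruct (Nat.testbit k t) eqn:Eb; auto.
    assert (existsb (Nat.testbit k) (seq 0 J) = true); [|congruence].
    apply existsb_exists. exists t. split; auto. apply in_seq. lia.
Qed.

Lemma ev_ifbot g c X w : eval q g (EIf c X BOT) w <-> eval q g c vt /\ eval q g X w.
Proof.
  rewrite ev_if. split.
  - intros [H|[_ H]]; auto. exfalso; eapply ev_bot; eauto.
  - intros H; auto.
Qed.

Lemma uq_neg g y x : g y = vb x -> uq g (EIf (VV y) FF TT) (vb (negb x)).
Proof.
  intros Gy v. rewrite ev_if, !ev_var, !ev_con0, Gy. destruct x; simpl; split.
  - intros [[_ ->]|[H _]]; auto. exfalso; apply vt_vf; auto.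
  - intros ->. left; auto.
  - intros [[H _]|[_ ->]]; auto. exfalso; apply vt_vf; auto.
  - intros ->. right; auto.
Qed.

Lemma L_dec2 n cs F k j x w : length cs = n -> Rep n F k -> 0 < k -> Ap n j -> 1 <= ip n j <= P n - 1 ->
  (call q (sym 5) [blist Sg cs; F; vb x; j] w <-> w = j /\ Nat.testbit (k - 1) (ip n j - 1) = x).
Proof.
  intros Hl R Hk Hj Rg. rewrite callk; [|lia|reflexivity].
  assert (Main : forall g, g 0 = blist Sg cs -> g 1 = F -> g 2 = vb x -> g 3 = j ->
     (eval q g (rhs 5) w <-> w = j /\ Nat.testbit (k - 1) (ip n j - 1) = x)).
  { intros g G0 G1 G2 G3. simpl rhs. rewrite ev_ch2.
    rewrite (ev_ifhas n cs g F k 3 j (VV 2) x); auto; [|rewrite <- G2; apply uq_var].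
    rewrite (ev_ifhas n cs g F k 3 j (EIf (VV 2) FF TT) (negb x)); auto; [|apply uq_neg; auto].
    rewrite !ev_ifbot, !ev_var, G3.
    rewrite (U3 g (sym 6) _ _ _ (blist Sg cs) F j); [|ar|rewrite <- G0; apply uq_var
      |rewrite <- G1; apply uq_var|rewrite <- G3; apply uq_var].
    rewrite (L_nlow n cs F k j vt Hl R Hj Rg).
    destruct (ev_p0 _ _ _ _ _ Hl G0 G3 Hj ltac:(lia)) as (pj & Apj & Ipj & Epj).
    rewrite (U3 g (sym 11) _ _ _ (blist Sg cs) F pj); [|ar|rewrite <- G0; apply uq_var
      |rewrite <- G1; apply uq_var|exact Epj].
    rewrite (L_allz n cs F k Hl R _ pj vt eq_refl Apj ltac:(lia)). split.
    - intros [((_ & B) & (_ & t & Ht & Bt) & ->)|((_ & B) & (_ & Hall) & ->)]; split; auto.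
      + rewrite bit_pred_nlow; auto. exists (t - 1). split; auto. lia.
      + rewrite bit_pred_low; auto. rewrite B. apply negb_involutive.
        intros t Ht. replace t with (S t - 1) by lia. apply Hall. lia.
    - intros (-> & B). destruct (dec_low k (ip n j - 1)) as [(t & Ht & Bt)|Hall].
      + left. rewrite bit_pred_nlow in B; eauto. split; [split; auto|]. split; auto.
        split; auto. exists (S t). split; [lia|]. replace (S t - 1) with t by lia. auto.
      + right. rewrite bit_pred_low in B; auto. split; [split; auto|].
        * rewrite <- B, negb_involutive; reflexivity.
        * split; auto. split; auto. intros t Ht. apply Hall. lia. }
  split.
  - intros (g & Hg & H). gv Hg 0. gv Hg 1. gv Hg 2. gv Hg 3. apply (Main g); auto.
  - intros H. exists (env [blist Sg cs; F; vb x; j]). split; [intros ii Hii; reflexivity|].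
    apply Main; auto.
Qed.

Lemma ev_s0u cs g sv : g 0 = blist Sg cs ->
  (forall w, call q s0 [blist Sg cs] w <-> w = sv) -> uq g (s0e (VV 0)) sv.
Proof.
  intros G0 Hs w. unfold s0e. rewrite (U1 g s0 _ (blist Sg cs)); [auto|apply arq_s0|].
  rewrite <- G0. apply uq_var.
Qed.

Lemma L_dec n cs F k : length cs = n -> Rep n F k -> 0 < k -> Rep n (VFun (sym 4) [blist Sg cs; F]) (k - 1).
Proof.
  intros Hl R Hk. destruct (seed_spec n cs Hl) as (sv & Asv & Isv & Esv).
  assert (Main : forall x w, callv (VFun (sym 4) [blist Sg cs; F]) (vb x) w <->
     exists v4, call q (sym 10) [blist Sg cs; sv] v4 /\ call q (sym 5) [blist Sg cs; F; vb x; v4] w).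
  { intros x w. unfold callv. simpl app. rewrite callk; [|lia|reflexivity]. split.
    - intros (g & Hg & H). gv Hg 0. gv Hg 1. gv Hg 2. simpl rhs in H.
      apply app4 in H; [|apply same_len_q|ar].
      destruct H as (v1 & v2 & v3 & v4 & H1 & H2 & H3 & H4 & H5).
      apply ev_var in H1. apply ev_var in H2. apply ev_var in H3. subst v1 v2 v3.
      rewrite G, G0, G1 in H5.
      apply (U2 g (sym 10) _ _ (blist Sg cs) sv) in H4; [|ar|rewrite <- G; apply uq_var|apply (ev_s0u cs); auto].
      eauto.
    - intros (v4 & H4 & H5). exists (env [blist Sg cs; F; vb x]). split; [intros ii Hii; reflexivity|].
      simpl rhs. apply app4; [apply same_len_q|ar|]. exists (blist Sg cs), F, (vb x), v4.
      split; [apply ev_var; reflexivity|]. split; [apply ev_var; reflexivity|].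
      split; [apply ev_var; reflexivity|]. split; auto.
      apply (U2 _ (sym 10) _ _ (blist Sg cs) sv); [ar|apply uq_var|apply (ev_s0u cs); auto|auto]. }
  destruct R as (Rb & Rs & Rc). split; [lia|]. split.
  - intros x w H. apply Main in H as (v4 & H4 & H5).
    apply (L_pos_sound n cs Hl _ sv v4 eq_refl Asv) in H4 as (Av4 & Iv4).
    apply (L_dec2 n cs F k v4 x w Hl (conj Rb (conj Rs Rc)) Hk Av4) in H5 as (-> & B); [|lia].
    split; auto. split; auto. lia.
  - intros x t Ht B.
    destruct (L_pos_comp n cs Hl _ sv t eq_refl Asv ltac:(lia)) as (v4 & C4 & Av4 & Iv4).
    exists v4. split; auto. apply Main. exists v4. split; auto.
    apply (L_dec2 n cs F k v4 x v4 Hl (conj Rb (conj Rs Rc)) Hk Av4); [lia|]. split; auto. congruence.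
Qed.

Lemma L_seedc n cs : length cs = n -> Rep n (VFun (sym 3) [blist Sg cs]) (2 ^ (P n - 1) - 1).
Proof.
  intros Hl. destruct (seed_spec n cs Hl) as (sv & Asv & Isv & Esv).
  assert (Main : forall x w, callv (VFun (sym 3) [blist Sg cs]) (vb x) w <->
     x = true /\ call q (sym 10) [blist Sg cs; sv] w).
  { intros x w. unfold callv. simpl app. rewrite callk; [|lia|reflexivity].
    assert (M : forall g, g 0 = blist Sg cs -> g 1 = vb x ->
       (eval q g (rhs 3) w <-> x = true /\ call q (sym 10) [blist Sg cs; sv] w)).
    { intros g G0 G1. simpl rhs. rewrite ev_ifbot, !ev_var, G1.
      rewrite (U2 g (sym 10) _ _ (blist Sg cs) sv); [|ar|rewrite <- G0; apply uq_var|apply (ev_s0u cs); auto].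
      destruct x; simpl.
      - split; intros [_ H]; auto.
      - split; [intros [H _]; exfalso; apply vt_vf; auto | intros [H _]; discriminate]. }
    split.
    - intros (g & Hg & H). gv Hg 0. gv Hg 1. apply (M g); auto.
    - intros H. exists (env [blist Sg cs; vb x]). split; [intros ii Hii; reflexivity|]. apply M; auto. }
  split; [pose proof (Nat.pow_nonzero 2 (P n - 1) ltac:(lia)); lia|]. split.
  - intros x w H. apply Main in H as (-> & H).
    apply (L_pos_sound n cs Hl _ sv w eq_refl Asv) in H as (Aw & Iw).
    split; auto. split; [lia|]. apply bits_ones. lia.
  - intros x t Ht B. rewrite bits_ones in B by lia. subst x.
    destruct (L_pos_comp n cs Hl _ sv t eq_refl Asv ltac:(lia)) as (w & C & Aw & Iw).
    exists w. split; auto. apply Main. auto.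
Qed.

Lemma L_nz n cs F k w : length cs = n -> Rep n F k ->
  (call q (sym 12) [blist Sg cs; F] w <-> w = vf /\ 0 < k).
Proof.
  intros Hl (Rb & Rs & Rc). rewrite callk; [|lia|reflexivity].
  assert (M : forall g, g 0 = blist Sg cs -> g 1 = F ->
     (eval q g (rhs 12) w <-> w = vf /\ 0 < k)).
  { intros g G0 G1. simpl rhs. rewrite ev_if, !ev_z0, !ev_con0. split.
    - intros [[(v & Ev & Cv) ->]|[(v & Ev & Cv) ->]]; split; auto;
        apply ev_appv in Ev as (v' & Ev' & Cv'); apply ev_con0 in Ev'; subst v';
        rewrite G1 in Cv'; destruct (Rs true v Cv') as (_ & _ & Bt);
        (destruct k; [rewrite Nat.bits_0 in Bt; discriminate|lia]).
    - intros (-> & Hk). right. split; auto.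
      destruct (bits_nonzero (P n - 1) k Hk Rb) as (t & Ht & Bt).
      destruct (Rc true (S t) ltac:(lia)) as (v & Cv & Av & Iv).
      { replace (S t - 1) with t by lia. auto. }
      exists v. split.
      + apply ev_appv. exists vt. split; [apply ev_con0; reflexivity|]. rewrite G1. exact Cv.
      + rewrite G0. apply (zero_spec n cs v Hl Av). lia. }
  split.
  - intros (g & Hg & H). gv Hg 0. gv Hg 1. apply (M g); auto.
  - intros H. exists (env [blist Sg cs; F]). split; [intros ii Hii; reflexivity|]. apply M; auto.
Qed.

Lemma L_zero n cs F k : length cs = n -> Rep n F k ->
  (call q (sym 2) [blist Sg cs; F] vt <-> k = 0) /\ (call q (sym 2) [blist Sg cs; F] vf <-> 0 < k).
Proof.
  intros Hl R. destruct (seed_spec n cs Hl) as (sv & Asv & Isv & Esv).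
  assert (M : forall w, call q (sym 2) [blist Sg cs; F] w <->
     (w = vt /\ forall t, 1 <= t <= ip n sv -> Nat.testbit k (t - 1) = false) \/ (w = vf /\ 0 < k)).
  { intros w. rewrite callk; [|lia|reflexivity].
    assert (M : forall g, g 0 = blist Sg cs -> g 1 = F -> (eval q g (rhs 2) w <->
       (w = vt /\ forall t, 1 <= t <= ip n sv -> Nat.testbit k (t - 1) = false) \/ (w = vf /\ 0 < k))).
    { intros g G0 G1. simpl rhs. rewrite ev_ch2.
      rewrite (U3 g (sym 11) _ _ _ (blist Sg cs) F sv); [|ar|rewrite <- G0; apply uq_var
        |rewrite <- G1; apply uq_var|apply (ev_s0u cs); auto].
      rewrite (U2 g (sym 12) _ _ (blist Sg cs) F); [|ar|rewrite <- G0; apply uq_var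
        |rewrite <- G1; apply uq_var].
      rewrite (L_allz n cs F k Hl R _ sv w eq_refl Asv ltac:(lia)).
      rewrite (L_nz n cs F k w Hl R). tauto. }
    split.
    - intros (g & Hg & H). gv Hg 0. gv Hg 1. apply (M g); auto.
    - intros H. exists (env [blist Sg cs; F]). split; [intros ii Hii; reflexivity|]. apply M; auto. }
  destruct R as (Rb & _ & _). split; rewrite M; split.
  - intros [(_ & H)|(H & _)]; [|exfalso; apply vt_vf; auto].
    apply (bits_zero (P n - 1)); auto. intros t Ht. replace t with (S t - 1) by lia. apply H. lia.
  - intros ->. left. split; auto. intros t _. apply Nat.bits_0.
  - intros [(H & _)|(_ & H)]; auto. exfalso; apply vt_vf; auto.
  - intros H. right. auto.
Qed.

Lemma L_seed' cs w : call q (sym 0) [blist Sg cs] w <-> w = VFun (sym 3) [blist Sg cs].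
Proof.
  rewrite callk; [|lia|reflexivity].
  assert (M : forall g, g 0 = blist Sg cs -> (eval q g (rhs 0) w <-> w = VFun (sym 3) [blist Sg cs])).
  { intros g G0. simpl rhs. rewrite papp1; [|apply same_len_q|ar]. rewrite <- G0. split.
    - intros (v & Ev & ->). apply ev_var in Ev. subst. auto.
    - intros ->. exists (g 0). split; auto. apply ev_var; auto. }
  split.
  - intros (g & Hg & H). gv Hg 0. apply (M g); auto.
  - intros H. exists (env [blist Sg cs]). split; [intros ii Hii; reflexivity|]. apply M; auto.
Qed.

Lemma L_pred' cs v w : call q (sym 1) [blist Sg cs; v] w <-> w = VFun (sym 4) [blist Sg cs; v].
Proof.
  rewrite callk; [|lia|reflexivity].
  assert (M : forall g, g 0 = blist Sg cs -> g 1 = v ->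
     (eval q g (rhs 1) w <-> w = VFun (sym 4) [blist Sg cs; v])).
  { intros g G0 G1. simpl rhs. rewrite papp2; [|apply same_len_q|ar]. rewrite <- G0, <- G1. split.
    - intros (v1 & v2 & E1 & E2 & ->). apply ev_var in E1. apply ev_var in E2. subst. auto.
    - intros ->. exists (g 0), (g 1). split; [apply ev_var; auto|]. split; [apply ev_var; auto|auto]. }
  split.
  - intros (g & Hg & H). gv Hg 0. gv Hg 1. apply (M g); auto.
  - intros H. exists (env [blist Sg cs; v]). split; [intros ii Hii; reflexivity|]. apply M; auto.
Qed.

Local Notation Ty := (ty (sort Sg)).
Local Notation LL := (TSort (@s_list Sg)).
Local Notation BB := (TSort (@s_bool Sg)).
Local Notation aa := (m_alpha m).
Local Notation al := (TArrow BB aa).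
Local Notation dt := (m_dtype m).

Definition ourty (k : nat) : Ty :=
  match k with
  | 0 => TArrow LL al
  | 1 => TArrow LL (TArrow al al)
  | 2 => TArrow LL (TArrow al BB)
  | 3 => TArrow LL (TArrow BB aa)
  | 4 => TArrow LL (TArrow al (TArrow BB aa))
  | 5 => TArrow LL (TArrow al (TArrow BB (TArrow aa aa)))
  | 6 => TArrow LL (TArrow al (TArrow aa BB))
  | 7 => TArrow LL (TArrow al (TArrow aa BB))
  | 8 => TArrow LL (TArrow al (TArrow BB (TArrow aa BB)))
  | 9 => TArrow LL (TArrow aa (TArrow aa BB))
  | 10 => TArrow LL (TArrow aa aa)
  | 11 => TArrow LL (TArrow al (TArrow aa BB))
  | _ => TArrow LL (TArrow al BB)
  end.

Definition ctx (k : nat) : list Ty :=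
  match k with
  | 0 => [LL] | 1 => [LL; al] | 2 => [LL; al] | 3 => [LL; BB] | 4 => [LL; al; BB]
  | 5 => [LL; al; BB; aa] | 6 => [LL; al; aa] | 7 => [LL; al; aa] | 8 => [LL; al; BB; aa]
  | 9 => [LL; aa; aa] | 10 => [LL; aa] | 11 => [LL; al; aa] | _ => [LL; al] end.

Definition res (k : nat) : Ty :=
  match k with
  | 0 => al | 1 => al | 2 => BB | 3 => aa | 4 => aa | 5 => aa | 6 => BB | 7 => BB | 8 => BB
  | 9 => BB | 10 => aa | 11 => BB | _ => BB end.

Definition dt' (f : fsym) : Ty := if in_dec Nat.eq_dec f D then dt f else ourty (f - b).

Lemma dt'_sym k : dt' (sym k) = ourty k.
Proof.
  unfold dt'. destruct (in_dec Nat.eq_dec (sym k) D) as [H|H].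
  - exfalso. apply (sym_notD k H).
  - unfold sym. f_equal. lia.
Qed.

Lemma dt'_D f : In f D -> dt' f = dt f.
Proof. unfold dt'. destruct (in_dec Nat.eq_dec f D); auto. contradiction. Qed.

Lemma Hst : dt s0 = TArrow LL aa.
Proof. destruct Hcm as (_ & _ & _ & _ & H & _). exact H. Qed.
Lemma Hpt : dt p0 = TArrow LL (TArrow aa aa).
Proof. destruct Hcm as (_ & _ & _ & _ & _ & H & _). exact H. Qed.
Lemma Hzt : dt z0 = TArrow LL (TArrow aa BB).
Proof. destruct Hcm as (_ & _ & _ & _ & _ & _ & H & _). exact H. Qed.
Lemma Hs0D : In s0 D. Proof. destruct Hcm as (_ & H & _). exact H. Qed.
Lemma Hp0D : In p0 D. Proof. destruct Hcm as (_ & _ & H & _). exact H. Qed.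
Lemma Hz0D : In z0 D. Proof. destruct Hcm as (_ & _ & _ & H & _). exact H. Qed.

Lemma HT_fun G f t : dt' f = t -> has_type dt' G (EF f) t.
Proof. intros <-. constructor. Qed.
Lemma HT_var G x t : G x = t -> has_type dt' G (VV x) t.
Proof. intros <-. constructor. Qed.
Lemma HT_true G : has_type dt' G TT BB.
Proof.
  destruct (@c_true_ty Sg) as [H1 H2]. rewrite <- H2. constructor. rewrite H1. constructor.
Qed.
Lemma HT_false G : has_type dt' G FF BB.
Proof.
  destruct (@c_false_ty Sg) as [H1 H2]. rewrite <- H2. constructor. rewrite H1. constructor.
Qed.

Ltac ty := repeat (match goal with
 | |- has_type _ _ (EApp _ _) _ => eapply T_App
 | |- has_type _ _ (EFun _ (sym _)) _ => apply HT_fun; rewrite dt'_sym; reflexivity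
 | |- has_type _ _ (EFun _ s0) _ => apply HT_fun; rewrite (dt'_D _ Hs0D), Hst; reflexivity
 | |- has_type _ _ (EFun _ p0) _ => apply HT_fun; rewrite (dt'_D _ Hp0D), Hpt; reflexivity
 | |- has_type _ _ (EFun _ z0) _ => apply HT_fun; rewrite (dt'_D _ Hz0D), Hzt; reflexivity
 | |- has_type _ _ (EVar _ _) _ => apply HT_var; reflexivity
 | |- has_type _ _ (EIf _ _ _) _ => apply T_If
 | |- has_type _ _ (EChoose _) _ =>
     let Hin := fresh "Hin" in apply T_Choose; intros ? Hin; simpl in Hin;
     repeat (destruct Hin as [<-|Hin]); try contradiction
 | |- has_type _ _ (ECon _ []) _ => first [apply HT_true | apply HT_false]
 end).

Lemma ours_typed k : k < 13 -> clause_typed dt' (fun x => nth x (ctx k) LL) (ocl k).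
Proof.
  intros Hk. exists (res k). unfold lhs_expr, ocl. simpl cl_lhs. simpl cl_f. simpl cl_rhs.
  do 13 (destruct k as [|k]; [simpl; unfold z0e, p0e, s0e, hase, apps; simpl; split; ty|]). lia.
Qed.

Definition D' := map sym (seq 0 13) ++ D.

Lemma sym_D' k : k < 13 -> In (sym k) D'.
Proof. intros Hk. apply in_or_app. left. apply in_map. apply in_seq. lia. Qed.

Lemma cpv (l : list var) : concat (map (@pat_vars Sg) (map (PVar Sg) l)) = l.
Proof. induction l as [|x l IH]; simpl; auto. f_equal. exact IH. Qed.

Lemma lhs_vars_ocl k : lhs_vars (ocl k) = seq 0 (ars k).
Proof. unfold lhs_vars, ocl. simpl cl_lhs. apply cpv. Qed.

Ltac unf := unfold z0e, p0e, s0e, hase, apps.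

Lemma ours_wf k : k < 13 -> wf_clause dt' (ocl k).
Proof.
  intros Hk. split; [rewrite lhs_vars_ocl; apply seq_NoDup|]. split.
  - intros x Hx. rewrite lhs_vars_ocl. apply in_seq. simpl cl_rhs in Hx.
    do 13 (destruct k as [|k]; [simpl rhs in Hx; unf; simpl in Hx; simpl ars;
      repeat (destruct Hx as [<-|Hx]; [lia|]); contradiction|]). lia.
  - exists (fun x => nth x (ctx k) LL). apply ours_typed; auto.
Qed.

Lemma ours_do k : k < 13 -> exists G, clause_typed dt' G (ocl k) /\
  forall x, In x (lhs_vars (ocl k)) -> ord (G x) <= 1.
Proof.
  intros Hk. exists (fun x => nth x (ctx k) LL). split; [apply ours_typed; auto|].
  intros x Hx. rewrite lhs_vars_ocl in Hx. apply in_seq in Hx.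
  assert (Hal : ord al <= 1) by (simpl; destruct (ord aa); lia).
  do 13 (destruct k as [|k]; [simpl ars in Hx; destruct x as [|[|[|[|x]]]]; try lia;
     simpl ctx; simpl nth; first [exact Hal | exact Hord | simpl; lia]|]). lia.
Qed.

Lemma ours_cf k : k < 13 -> cons_free_clause (ocl k).
Proof.
  intros Hk t Ht (c & es & ->). left. unfold subexprs in Ht. simpl cl_rhs in Ht.
  do 13 (destruct k as [|k]; [simpl rhs in Ht; unf; simpl in Ht;
     repeat (destruct Ht as [Ht|Ht]; [first [discriminate Ht | (injection Ht as <- <-; simpl; exact I)]|]);
     contradiction|]). lia.
Qed.

Lemma ours_fs k : k < 13 -> In (cl_f (ocl k)) D' /\ forall f, In f (expr_fsyms (cl_rhs (ocl k))) -> In f D'.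
Proof.
  intros Hk. split; [apply sym_D'; auto|]. intros f Hf. simpl cl_rhs in Hf.
  do 13 (destruct k as [|k]; [simpl rhs in Hf; unf; simpl in Hf;
     repeat (destruct Hf as [<-|Hf];
       [first [apply sym_D'; lia | apply in_or_app; right; first [apply Hs0D|apply Hp0D|apply Hz0D]]|]);
     contradiction|]). lia.
Qed.

Lemma transport_p G cl : In cl p -> clause_typed dt G cl -> clause_typed dt' G cl.
Proof.
  intros Hcl (t & H1 & H2). exists t. split.
  - apply (proj1 (ht_transport Sg dt dt' G)); auto. intros f Hf. apply fs_lhs in Hf. subst.
    apply dt'_D. apply HpD; auto.
  - apply (proj1 (ht_transport Sg dt dt' G)); auto. intros f Hf.
    apply dt'_D. apply (proj2 (HpD cl Hcl)); auto.
Qed.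

Lemma p_wf cl : In cl p -> wf_clause dt' cl.
Proof.
  intros Hcl. destruct Hwf as [H _]. destruct (H cl Hcl) as (H1 & H2 & G & H3).
  split; auto. split; auto. exists G. apply transport_p; auto.
Qed.

Lemma p_do cl : In cl p -> exists G, clause_typed dt' G cl /\
  forall x, In x (lhs_vars cl) -> ord (G x) <= 1.
Proof.
  intros Hcl. destruct (Hdo cl Hcl) as (G & H1 & H2). exists G. split.
  - apply transport_p; auto.
  - intros x Hx. specialize (H2 x Hx). lia.
Qed.

Lemma Hcf : forall cl, In cl p -> cons_free_clause cl.
Proof. destruct Hcm as (_ & _ & _ & _ & _ & _ & _ & _ & H & _). exact H. Qed.

Inductive nest (n : nat) : nat -> val Sg -> Prop :=
| nest0 cs : length cs = n -> nest n 0 (VFun (sym 3) [blist Sg cs])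
| nestS d cs F : nest n d F -> length cs = n -> nest n (S d) (VFun (sym 4) [blist Sg cs; F]).

Fixpoint depth (v : val Sg) : nat :=
  match v with VFun _ [_; F] => S (depth F) | _ => 0 end.

Definition NN n := 2 ^ (P n - 1) - 1.
Definition A' n v := exists d, nest n d v /\ d <= NN n.
Definition interp' n v := NN n - depth v.

Lemma nest_depth n d v : nest n d v -> depth v = d.
Proof. induction 1; simpl; auto. Qed.

Lemma nest_rep n d v : nest n d v -> d <= NN n -> Rep n v (NN n - d).
Proof.
  induction 1 as [cs Hl|d cs F H IH Hl]; intros Hd.
  - rewrite Nat.sub_0_r. apply L_seedc; auto.
  - replace (NN n - S d) with (NN n - d - 1) by lia. apply L_dec; auto. apply IH. lia. lia.
Qed.

Lemma blist_type cs : val_type dt' (arity q) (blist Sg cs) LL.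
Proof.
  induction cs as [|x cs IH]; simpl.
  - destruct (@c_nil_ty Sg) as [H1 H2]. rewrite <- H2. constructor. rewrite H1. constructor.
  - destruct (@c_cons_ty Sg) as [H1 H2]. rewrite <- H2. constructor. rewrite H1.
    constructor; [|constructor; auto; constructor].
    destruct x.
    + destruct (@c_true_ty Sg) as [H3 H4]. rewrite <- H4. constructor. rewrite H3. constructor.
    + destruct (@c_false_ty Sg) as [H3 H4]. rewrite <- H4. constructor. rewrite H3. constructor.
Qed.

Lemma nest_type n d v : nest n d v -> val_type dt' (arity q) v al /\ incl (val_fsyms v) D'.
Proof.
  induction 1 as [cs Hl|d cs F H IH Hl].
  - split.
    + apply VT_Fun with (ts := [LL]).
      * constructor; [apply blist_type|constructor].
      * rewrite arity_sym by lia. simpl. lia.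
      * rewrite dt'_sym. reflexivity.
    + simpl. rewrite blist_fs. simpl. intros f [<-|[]]. apply sym_D'; lia.
  - destruct IH as [IH1 IH2]. split.
    + apply VT_Fun with (ts := [LL; al]).
      * constructor; [apply blist_type|constructor; [auto|constructor]].
      * rewrite arity_sym by lia. simpl. lia.
      * rewrite dt'_sym. reflexivity.
    + simpl. rewrite blist_fs, app_nil_r. simpl. intros f [<-|Hf]; [apply sym_D'; lia|auto].
Qed.

Definition m' : module Sg := mkModule al D' dt' (sym 0) (sym 1) (sym 2) A' interp' q.

Theorem main_result : counting_module (fun n => 2 ^ (P n - 1)) m' /\ module_data_order m' 1.
Proof.
  split.
  - unfold counting_module, m'. cbn [m_prog m_dtype m_alpha m_seed m_pred m_zero m_D m_A m_interp].
    split.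
    { repeat constructor; simpl; intros H; repeat destruct H as [H|H]; auto;
      apply sym_inj in H; discriminate. }
    split; [apply sym_D'; lia|]. split; [apply sym_D'; lia|]. split; [apply sym_D'; lia|].
    split; [rewrite dt'_sym; reflexivity|]. split; [rewrite dt'_sym; reflexivity|].
    split; [rewrite dt'_sym; reflexivity|].
    split.
    { split.
      - intros cl Hcl. unfold q in Hcl. apply in_app_or in Hcl as [Hcl|Hcl].
        + apply in_ours in Hcl as (k & Hk & ->). apply ours_wf; auto.
        + apply p_wf; auto.
      - intros cl1 cl2 H1 H2 Hf. apply same_len_q; auto. }
    split.
    { intros cl Hcl. unfold q in Hcl. apply in_app_or in Hcl as [Hcl|Hcl].
      + apply in_ours in Hcl as (k & Hk & ->). apply ours_cf; auto.
      + apply Hcf; auto. }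
    split.
    { intros cl Hcl. unfold q in Hcl. apply in_app_or in Hcl as [Hcl|Hcl].
      + apply in_ours in Hcl as (k & Hk & ->). apply ours_fs; auto.
      + destruct (HpD cl Hcl) as [H1 H2]. split.
        * apply in_or_app; right; auto.
        * intros f Hf. apply in_or_app; right; auto. }
    split.
    { intros n v (d & Hn & Hd). destruct (nest_type n d v Hn) as [H1 H2]. split; auto. }
    intros n cs Hl. split; [|split].
    + exists (VFun (sym 3) [blist Sg cs]). split; [apply L_seed'; auto|]. split.
      * intros v' H. apply L_seed'; auto.
      * split; [exists 0; split; [constructor; auto|lia]|]. unfold interp', NN. simpl. lia.
    + intros v i (d & Hn & Hd) Hi Hi0. exists (VFun (sym 4) [blist Sg cs; v]).
      split; [apply L_pred'; auto|]. split; [intros w' H; apply L_pred'; auto|].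
      unfold interp' in *. rewrite (nest_depth _ _ _ Hn) in Hi. split.
      * exists (S d). split; [constructor; auto|lia].
      * simpl. rewrite (nest_depth _ _ _ Hn). lia.
    + intros v (d & Hn & Hd). unfold interp'. rewrite (nest_depth _ _ _ Hn).
      destruct (L_zero n cs v (NN n - d) Hl (nest_rep n d v Hn Hd)) as [Z1 Z2].
      split; [rewrite Z1|rewrite Z2]; split; intros; lia.
  - unfold module_data_order, m'. cbn [m_prog m_dtype]. intros cl Hcl. unfold q in Hcl. apply in_app_or in Hcl as [Hcl|Hcl].
    + apply in_ours in Hcl as (k & Hk & ->). apply ours_do; auto.
    + apply p_do; auto.
Qed.

End Main.

Section Triv.
Variable Sg : signature.
Variable P : nat -> nat.
Hypothesis HP1 : forall n, P n = 1.

Local Notation vt := (vtrue Sg).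
Local Notation vf := (vfalse Sg).
Local Notation VV := (EVar Sg).
Local Notation TT := (ECon (@c_true Sg) []).
Local Notation LL := (TSort (@s_list Sg)).
Local Notation BB := (TSort (@s_bool Sg)).

Definition tcl (k : nat) : clause Sg :=
  match k with
  | 0 => mkClause 0 [PVar Sg 0] TT
  | 1 => mkClause 1 [PVar Sg 0; PVar Sg 1] (VV 1)
  | _ => mkClause 2 [PVar Sg 0; PVar Sg 1] TT
  end.

Definition q0 : program Sg := [tcl 0; tcl 1; tcl 2].

Definition dt0 (f : fsym) : ty (sort Sg) :=
  match f with 0 => TArrow LL BB | _ => TArrow LL (TArrow BB BB) end.

Definition G0 (x : var) : ty (sort Sg) := match x with 0 => LL | _ => BB end.

Definition A0 (n : nat) (v : val Sg) : Prop := v = vt.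
Definition I0 (n : nat) (v : val Sg) : nat := 0.

Definition m0 : module Sg := mkModule BB [0; 1; 2] dt0 0 1 2 A0 I0 q0.

Lemma q0_cases cl : In cl q0 -> cl = tcl 0 \/ cl = tcl 1 \/ cl = tcl 2.
Proof. simpl. intros [<-|[<-|[<-|[]]]]; auto. Qed.

Lemma same_len_q0 : same_len q0.
Proof.
  intros c1 c2 H1 H2 Hf. apply q0_cases in H1; apply q0_cases in H2; destruct H1 as [-> | [-> | ->]]; destruct H2 as [-> | [-> | ->]];
  simpl in *; auto; discriminate.
Qed.

Lemma call_q0 k vs w d : k < 3 -> length vs = length (cl_lhs (tcl k)) ->
  (call q0 k vs w <-> exists g, (forall i, i < length vs -> g i = nth i vs d) /\ eval q0 g (cl_rhs (tcl k)) w).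
Proof.
  intros Hk Hl. rewrite Hl.
  replace k with (cl_f (tcl k)) at 1 by (destruct k as [|[|[|]]]; simpl; auto; lia).
  apply call_clause_iff; auto.
  - apply same_len_q0.
  - destruct k as [|[|[|]]]; simpl; auto; lia.
  - intros cl' H' Hf. apply q0_cases in H' as [-> | [-> | ->]];
    destruct k as [|[|[|]]]; simpl in *; auto; try discriminate; lia.
  - destruct k as [|[|[|]]]; simpl; auto; lia.
Qed.

Lemma evT g w : eval q0 g TT w <-> w = vt.
Proof.
  split; intros H.
  - inversion H; subst. match goal with H : eval_list _ _ _ _ |- _ => inversion H end. auto.
  - subst. constructor. constructor.
Qed.

Lemma vt_vf0 : vt <> vf.
Proof. intros H. injection H. apply c_true_false. Qed.

Lemma typed0 k : k < 3 -> clause_typed dt0 G0 (tcl k).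
Proof.
  intros Hk. destruct (@c_true_ty Sg) as [H1 H2].
  assert (HTf : forall f t, dt0 f = t -> has_type dt0 G0 (EFun Sg f) t) by (intros f t <-; constructor).
  assert (HT : has_type dt0 G0 TT BB).
  { rewrite <- H2. constructor. rewrite H1. constructor. }
  exists BB. destruct k as [|[|[|]]]; [| | |lia]; unfold lhs_expr; simpl;
    (split; [repeat econstructor | first [exact HT | repeat econstructor]]).
  all: apply HTf; reflexivity.
Qed.

Theorem triv_result : counting_module (fun n => 2 ^ (P n - 1)) m0 /\ module_data_order m0 1.
Proof.
  split.
  - unfold counting_module, m0. cbn [m_prog m_dtype m_alpha m_seed m_pred m_zero m_D m_A m_interp].
    split. { repeat constructor; simpl; intuition discriminate. }
    split; [simpl; auto|]. split; [simpl; auto|]. split; [simpl; auto|].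
    split; [reflexivity|]. split; [reflexivity|]. split; [reflexivity|].
    split.
    { split.
      - intros cl Hcl. apply q0_cases in Hcl.
        assert (Hk : exists k, k < 3 /\ cl = tcl k) by
          (destruct Hcl as [-> | [-> | ->]]; [exists 0|exists 1|exists 2]; split; auto).
        destruct Hk as (k & Hk & ->). split; [|split].
        + destruct k as [|[|[|]]]; simpl; [| | |lia]; repeat constructor; simpl; intuition discriminate.
        + destruct k as [|[|[|]]]; simpl; [| | |lia]; intuition.
        + exists G0. apply typed0; auto.
      - intros c1 c2 H1 H2 Hf. apply same_len_q0; auto. }
    split.
    { intros cl Hcl t Ht (c & es & ->). left. apply q0_cases in Hcl as [-> | [-> | ->]];
      simpl in Ht; destruct Ht as [Ht|[]]; try discriminate; injection Ht as <- <-; simpl; exact I. }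
    split.
    { intros cl Hcl. apply q0_cases in Hcl as [-> | [-> | ->]]; simpl; split; auto; intros f []. }
    split.
    { intros n v Hv. unfold A0 in Hv. subst. split; [|simpl; intros f []].
      destruct (@c_true_ty Sg) as [H1 H2]. rewrite <- H2. constructor. rewrite H1. constructor. }
    intros n cs Hl. split; [|split].
    + exists vt. split; [|split; [|split; [reflexivity|]]].
      * apply (call_q0 0 _ _ vt); auto. exists (fun i => nth i [blist Sg cs] vt). split; [intros i Hi; reflexivity|].
        apply evT; auto.
      * intros v' H. apply (call_q0 0 _ _ vt) in H as (g & _ & H); auto. apply evT in H; auto.
      * unfold I0. rewrite HP1. reflexivity.
    + intros v i _ Hi Hi0. unfold I0 in Hi. lia.
    + intros v Hv. unfold A0 in Hv. subst v. unfold I0. split; split; intros H; try lia.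
      * apply (call_q0 2 _ _ vt); auto. exists (fun i => nth i [blist Sg cs; vt] vt). split; [intros i Hi; reflexivity|].
        apply evT; auto.
      * apply (call_q0 2 _ _ vt) in H as (g & _ & H); auto. apply evT in H. exfalso; apply vt_vf0; auto.
  - unfold module_data_order, m0. cbn [m_prog m_dtype]. intros cl Hcl. exists G0.
    apply q0_cases in Hcl.
    assert (Hk : exists k, k < 3 /\ cl = tcl k) by
      (destruct Hcl as [-> | [-> | ->]]; [exists 0|exists 1|exists 2]; split; auto).
    destruct Hk as (k & Hk & ->). split; [apply typed0; auto|].
    intros x Hx. destruct x; simpl; lia.
Qed.

End Triv.

Lemma fold_typed (Sg : signature) dt G (ls : list (pat Sg)) : forall e0 t,
  has_type dt G (fold_left (fun e l => EApp e (pat_expr l)) ls e0) t -> exists t0, has_type dt G e0 t0.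
Proof.
  induction ls as [|l ls IH]; simpl; intros e0 t H; eauto.
  apply IH in H as (t0 & H). inversion H; subst. eauto.
Qed.

Lemma ht_app (Sg : signature) dt G (a c : expr Sg) t : has_type dt G (EApp a c) t ->
  exists s, has_type dt G a (TArrow s t) /\ has_type dt G c s.
Proof. intros H. inversion H; subst. eauto. Qed.

Lemma ht_fun (Sg : signature) dt G f (t : ty (sort Sg)) : has_type dt G (EFun Sg f) t -> t = dt f.
Proof. intros H. inversion H; subst. auto. Qed.

Lemma ht_var (Sg : signature) dt G x (t : ty (sort Sg)) : has_type dt G (EVar Sg x) t -> t = G x.
Proof. intros H. inversion H; subst. auto. Qed.

Lemma ht_con (Sg : signature) dt G c es (t : ty (sort Sg)) : has_type dt G (ECon c es) t -> exists s, t = TSort s.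
Proof. intros H. inversion H; subst. eauto. Qed.

Lemma in_list_max (l : list nat) x : In x l -> x <= list_max l.
Proof.
  intros H. assert (H2 : list_max l <= list_max l) by lia. apply list_max_le in H2.
  rewrite Forall_forall in H2. auto.
Qed.

Lemma derive_facts (Sg : signature) (P : nat -> nat) (m : module Sg) K :
  counting_module P m -> K <= 1 -> module_data_order m K -> (exists n, 2 <= P n) ->
  1 < arity (m_prog m) (m_pred m) /\ ord (m_alpha m) <= 1.
Proof.
  intros Hcm HK Hdo (n & Hn).
  pose proof Hcm as Hcm'.
  destruct Hcm' as (_ & _ & _ & _ & _ & Hpt & _ & Hwf & _ & _ & _ & Hsem).
  assert (Hsl : same_len (m_prog m)) by (destruct Hwf as [_ H]; intros ? ? ? ? ?; apply H; auto).
  destruct (Hsem n (repeat false n) (repeat_length false n)) as ((v & _ & _ & Av & Iv) & Hpr & _).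
  destruct (Hpr v (P n - 1) Av Iv ltac:(lia)) as (w & Cw & _).
  apply call_len in Cw; auto. simpl in Cw.
  split; [lia|].
  destruct (arity_pos_in (m_prog m) (m_pred m) ltac:(lia)) as (cl & Hcl & Hf).
  pose proof (@arity_eq Sg (m_prog m) cl Hsl Hcl) as Ha. rewrite Hf in Ha.
  destruct (Hdo cl Hcl) as (G & (t & Hlhs & _) & Hord).
  unfold lhs_expr in Hlhs. destruct (cl_lhs cl) as [|l1 [|l2 rest]] eqn:El; simpl in Ha; try lia.
  simpl in Hlhs. apply fold_typed in Hlhs as (t0 & H).
  apply ht_app in H as (s2 & H & H5). apply ht_app in H as (s1 & H & H4). apply ht_fun in H.
  rewrite Hf, Hpt in H. injection H as _ -> _.
  destruct l2 as [x|c ls]; simpl in H5.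
  - apply ht_var in H5. rewrite H5. apply Nat.le_trans with K; auto. apply Hord. unfold lhs_vars. rewrite El. simpl. apply in_or_app. right. left. auto.
  - apply ht_con in H5 as (s & ->). simpl. lia.
Qed.

Theorem lemma10 (Sg : signature) (P : nat -> nat) (HP : forall n, P n <> 0) :
  (exists m : module Sg, counting_module P m /\
     exists K, K <= 1 /\ module_data_order m K) ->
  exists m' : module Sg,
    counting_module (fun n => 2 ^ (P n - 1)) m' /\ module_data_order m' 1.
Proof.
  intros (m & Hcm & K & HK & Hdo).
  destruct (classic (exists n, 2 <= P n)) as [Hex|Hno].
  - destruct (derive_facts Sg P m K Hcm HK Hdo Hex) as [Harp Hord].
    set (b := S (list_max (m_D m))).
    assert (Hb : forall k, ~ In (k + b) (m_D m)).
    { intros k Hin. apply in_list_max in Hin. unfold b in Hin. lia. }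
    eexists. eapply main_result with (K := K) (b := b); eauto.
  - exists (m0 Sg). apply triv_result. intros n. specialize (HP n).
    assert (~ 2 <= P n) by (intros H; apply Hno; eauto). lia.
Qed.
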